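(* In the setting of fixed unlabeled samples $S_1,\dots,S_T$, fixed $I$ with $|I|=k$, and fixed $\alpha^1,\dots,\alpha^T\in\Lambda^I$, define $$\Phi=\sup_{h_1,\dots,h_T\in\mathcal{H}}\frac1T\sum_{t=1}^T\big(\tilde{\mathrm{er}}_{\alpha^t}(h_t)-\widehat{\mathrm{er}}_{\alpha^t}(h_t)\big),$$ where the $\overline{S}_i$ ($i\in I$) are independent uniformly random $m$-subsets of $S_i$ drawn without replacement. Assume $\mathcal{H}$ has VC dimension $d$ with $1\le d\le m\le n$. Then $$\mathbb{E}_{\overline{S}_i,\,i\in I}\,\Phi\le\frac1T\sum_{t=1}^T\sqrt{\sum_{i\in I}(\alpha^t_i)^2}\cdot\sqrt{\frac{2d\log(ekm/d)}{m}}.$$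
   Context: Here $S_i=(x^i_1,\dots,x^i_n)$. Labeling functions $f_i:\mathcal{X}\to\{-1,1\}$ are given, and $\ell$ is the $0/1$-loss. Weight sets: $\Lambda^I=\{\alpha\in[0,1]^T:\sum_i\alpha_i=1,\ \alpha_i=0\text{ for }i\notin I\}$. Empirical errors: - $\tilde{\mathrm{er}}_i(h)=\frac1n\sum_{j=1}^n\ell(h(x^i_j),f_i(x^i_j))$; - $\widehat{\mathrm{er}}_i(h)=\frac1m\sum_{x\in\overline{S}_i}\ell(h(x),f_i(x))$; - $\tilde{\mathrm{er}}_\alpha=\sum_{i\in I}\alpha_i\tilde{\mathrm{er}}_i$ and $\widehat{\mathrm{er}}_\alpha=\sum_{i\in I}\alpha_i\widehat{\mathrm{er}}_i$. *)

(* Defs.v *)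
From Stdlib Require Import Reals Lra Lia List Arith Bool.
From Stdlib Require Import Classical ClassicalEpsilon.
Import ListNotations.
Open Scope R_scope.

Definition sumR {A : Type} (l : list A) (F : A -> R) : R :=
  fold_right (fun a acc => F a + acc) 0 l.

(* supremum (least upper bound) of a set of reals, chosen classically;
   it is the actual lub whenever one exists *)
Definition Rsup (E : R -> Prop) : R :=
  epsilon (inhabits 0) (fun s => is_lub E s).

(* 0/1 loss; labels {-1,1} are encoded as bool *)
Definition loss01 (a b : bool) : R := if Bool.eqb a b then 0 else 1.

(* all m-subsets of {0,...,n-1}, each given as a strictly increasing list of
   positions (subsets of the sample S_i = (x^i_0,...,x^i_{n-1}) by position) *)
Fixpoint msubsets_from (lo n m : nat) {struct n} : list (list nat) :=
  match m with
  | O => [ [] ]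
  | S m' =>
    match n with
    | O => []
    | S n' => map (cons lo) (msubsets_from (S lo) n' m')
              ++ msubsets_from (S lo) n' m
    end
  end.
Definition msubsets (n m : nat) : list (list nat) := msubsets_from 0 n m.

(* all tuples (Sbar_i)_{i in I} of m-subsets of {0..n-1}, as functions
   nat -> list nat (values outside I are irrelevant, set to []) *)
Fixpoint choices (I : list nat) (n m : nat) : list (nat -> list nat) :=
  match I with
  | [] => [ fun _ => [] ]
  | i :: I' =>
    flat_map (fun s => map (fun g => fun j => if Nat.eqb j i then s else g j)
                           (choices I' n m))
             (msubsets n m)
  end.

Definition expect_subsets (I : list nat) (n m : nat)
  (F : (nat -> list nat) -> R) : R :=
  sumR (choices I n m) F / INR (length (choices I n m)).

Section Errors.
Context {X : Type} (S : nat -> nat -> X) (f : nat -> X -> bool) (n m : nat).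

Definition er_tilde (i : nat) (h : X -> bool) : R :=
  / INR n * sumR (seq 0 n) (fun j => loss01 (h (S i j)) (f i (S i j))).

Definition er_hat (sb : list nat) (i : nat) (h : X -> bool) : R :=
  / INR m * sumR sb (fun j => loss01 (h (S i j)) (f i (S i j))).

Definition er_tilde_w (I : list nat) (a : nat -> R) (h : X -> bool) : R :=
  sumR I (fun i => a i * er_tilde i h).

Definition er_hat_w (Sbar : nat -> list nat) (I : list nat) (a : nat -> R)
  (h : X -> bool) : R :=
  sumR I (fun i => a i * er_hat (Sbar i) i h).
End Errors.

(* alpha in Lambda^I  (indices of tasks are 0..T-1) *)
Definition in_Lambda (T : nat) (I : list nat) (a : nat -> R) : Prop :=
  (forall i, (i < T)%nat -> 0 <= a i <= 1) /\
  sumR I a = 1 /\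
  (forall i, (i < T)%nat -> ~ In i I -> a i = 0).

Definition shatters {X : Type} (H : (X -> bool) -> Prop) (P : list X) : Prop :=
  NoDup P /\
  forall b : X -> bool, exists h, H h /\ forall x, In x P -> h x = b x.

Definition VCdim {X : Type} (H : (X -> bool) -> Prop) (d : nat) : Prop :=
  (exists P, length P = d /\ shatters H P) /\
  (forall P, shatters H P -> (length P <= d)%nat).

Definition Phi {X : Type} (S : nat -> nat -> X) (f : nat -> X -> bool)
  (H : (X -> bool) -> Prop) (T n m : nat) (I : list nat)
  (alpha : nat -> nat -> R) (Sbar : nat -> list nat) : R :=
  Rsup (fun v => exists hs : nat -> (X -> bool),
          (forall t, (t < T)%nat -> H (hs t)) /\
          v = / INR T * sumR (seq 0 T) (fun t =>
                er_tilde_w S f n I (alpha t) (hs t)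
                - er_hat_w S f m Sbar I (alpha t) (hs t))).

(* Main.v *)
Require Import Defs.
From Stdlib Require Import Reals List.
From Stdlib Require Import Lra Lia Arith Bool Permutation ListDec Sorted.
From Stdlib Require Import Classical ClassicalEpsilon FunctionalExtensionality.
Import ListNotations.
Open Scope R_scope.

Lemma sumR_nil {A} (F : A -> R) : sumR [] F = 0.
Proof. reflexivity. Qed.
Lemma sumR_cons {A} (a : A) l F : sumR (a :: l) F = F a + sumR l F.
Proof. reflexivity. Qed.
Lemma sumR_app {A} (l1 l2 : list A) F : sumR (l1 ++ l2) F = sumR l1 F + sumR l2 F.
Proof. induction l1; simpl; [lra|]. unfold sumR in *; simpl. rewrite IHl1; lra. Qed.
Lemma sumR_map {A B} (f : A -> B) l F : sumR (map f l) F = sumR l (fun x => F (f x)).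
Proof. induction l; simpl; auto. unfold sumR in *; simpl; rewrite IHl; auto. Qed.
Lemma sumR_ext {A} (l : list A) F G : (forall x, In x l -> F x = G x) -> sumR l F = sumR l G.
Proof. induction l; intros; simpl; auto. unfold sumR in *; simpl.
  rewrite H by (left; auto). rewrite IHl; auto. intros; apply H; right; auto. Qed.
Lemma sumR_plus {A} (l : list A) F G : sumR l (fun x => F x + G x) = sumR l F + sumR l G.
Proof. induction l; unfold sumR in *; simpl; [lra|]. rewrite IHl; lra. Qed.
Lemma sumR_minus {A} (l : list A) F G : sumR l (fun x => F x - G x) = sumR l F - sumR l G.
Proof. induction l; unfold sumR in *; simpl; [lra|]. rewrite IHl; lra. Qed.
Lemma sumR_scal {A} (l : list A) c F : sumR l (fun x => c * F x) = c * sumR l F.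
Proof. induction l; unfold sumR in *; simpl; [lra|]. rewrite IHl; lra. Qed.
Lemma sumR_le {A} (l : list A) F G : (forall x, In x l -> F x <= G x) -> sumR l F <= sumR l G.
Proof. induction l; intros; unfold sumR in *; simpl; [lra|].
  assert (F a <= G a) by (apply H; left; auto).
  assert (fold_right (fun a0 acc => F a0 + acc) 0 l <= fold_right (fun a0 acc => G a0 + acc) 0 l)
   by (apply IHl; intros; apply H; right; auto). lra. Qed.
Lemma sumR_nonneg {A} (l : list A) F : (forall x, In x l -> 0 <= F x) -> 0 <= sumR l F.
Proof. intros. replace 0 with (sumR l (fun _ => 0)). apply sumR_le; auto.
  induction l; auto. unfold sumR in *; simpl; rewrite IHl; [lra|]. intros; apply H; right; auto. Qed.
Lemma sumR_const {A} (l : list A) c : sumR l (fun _ => c) = INR (length l) * c.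
Proof. induction l. unfold sumR; simpl; lra. rewrite sumR_cons, IHl. change (length (a :: l)) with (S (length l)). rewrite S_INR; lra. Qed.
Lemma sumR_perm {A} (l1 l2 : list A) F : Permutation l1 l2 -> sumR l1 F = sumR l2 F.
Proof. induction 1; unfold sumR in *; simpl; try lra. Qed.
Lemma sumR_flat_map {A B} (f : A -> list B) l F : sumR (flat_map f l) F = sumR l (fun a => sumR (f a) F).
Proof. induction l; simpl; auto. rewrite sumR_app, IHl; auto. Qed.
Lemma sumR_swap {A B} (l1 : list A) (l2 : list B) F :
  sumR l1 (fun a => sumR l2 (fun b => F a b)) = sumR l2 (fun b => sumR l1 (fun a => F a b)).
Proof. induction l1. - rewrite sumR_nil. symmetry. transitivity (sumR l2 (fun _ : B => 0)).
  apply sumR_ext; auto. rewrite sumR_const; lra.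
  - rewrite sumR_cons, IHl1. rewrite <- sumR_plus. apply sumR_ext; intros; rewrite sumR_cons; auto. Qed.
Lemma sumR_abs {A} (l : list A) F : Rabs (sumR l F) <= sumR l (fun x => Rabs (F x)).
Proof. induction l; unfold sumR in *; simpl. rewrite Rabs_R0; lra.
  eapply Rle_trans. apply Rabs_triang. lra. Qed.

Definition avg {A} (l : list A) (F : A -> R) : R := sumR l F / INR (length l).

Lemma INR_len_pos {A} (l : list A) : l <> [] -> 0 < INR (length l).
Proof. intros. destruct l; [congruence|]. simpl length. rewrite S_INR. pose proof (pos_INR (length l)). lra. Qed.

Lemma avg_ext {A} (l : list A) F G : (forall x, In x l -> F x = G x) -> avg l F = avg l G.
Proof. intros; unfold avg; rewrite (sumR_ext _ _ _ H); auto. Qed.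
Lemma avg_le {A} (l : list A) F G : (forall x, In x l -> F x <= G x) -> avg l F <= avg l G.
Proof. intros; unfold avg. destruct l. simpl; unfold sumR; simpl; lra.
  apply Rmult_le_compat_r. left; apply Rinv_0_lt_compat, INR_len_pos; congruence.
  apply sumR_le; auto. Qed.
Lemma avg_const {A} (l : list A) c : l <> [] -> avg l (fun _ => c) = c.
Proof. intros; unfold avg; rewrite sumR_const. pose proof (INR_len_pos l H). field; lra. Qed.
Lemma avg_plus {A} (l : list A) F G : avg l (fun x => F x + G x) = avg l F + avg l G.
Proof. unfold avg; rewrite sumR_plus; unfold Rdiv; ring. Qed.
Lemma avg_scal {A} (l : list A) c F : avg l (fun x => c * F x) = c * avg l F.
Proof. unfold avg; rewrite sumR_scal; unfold Rdiv; ring. Qed.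
Lemma avg_sumR {A B} (l : list A) (L : list B) F : avg l (fun x => sumR L (fun b => F x b)) = sumR L (fun b => avg l (fun x => F x b)).
Proof. unfold avg. rewrite sumR_swap. unfold Rdiv. rewrite <- (Rmult_comm (/ INR (length l))), <- sumR_scal.
  apply sumR_ext; intros; lra. Qed.
Lemma avg_swap {A B} (l1 : list A) (l2 : list B) F :
  avg l1 (fun a => avg l2 (fun b => F a b)) = avg l2 (fun b => avg l1 (fun a => F a b)).
Proof. unfold avg. unfold Rdiv.
  replace (sumR l1 (fun a => sumR l2 (fun b => F a b) * / INR (length l2)))
    with (sumR l1 (fun a => sumR l2 (fun b => F a b)) * / INR (length l2)).
  replace (sumR l2 (fun b => sumR l1 (fun a => F a b) * / INR (length l1)))
    with (sumR l2 (fun b => sumR l1 (fun a => F a b)) * / INR (length l1)).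
  rewrite sumR_swap; ring.
  rewrite Rmult_comm, <- sumR_scal; apply sumR_ext; intros; ring.
  rewrite Rmult_comm, <- sumR_scal; apply sumR_ext; intros; ring. Qed.
Lemma avg_nonneg {A} (l : list A) F : (forall x, In x l -> 0 <= F x) -> 0 <= avg l F.
Proof. intros. unfold avg, Rdiv. apply Rmult_le_pos. apply sumR_nonneg; auto.
  destruct l. simpl; rewrite Rinv_0; lra. left; apply Rinv_0_lt_compat, INR_len_pos; congruence. Qed.

Lemma perm_of_bij {A} (l : list A) (phi : A -> A) :
  NoDup l -> (forall x, In x l -> In (phi x) l) ->
  (forall x y, In x l -> In y l -> phi x = phi y -> x = y) -> Permutation (map phi l) l.
Proof. intros Hnd Hin Hinj. apply NoDup_Permutation_bis.
  { apply NoDup_map_NoDup_ForallPairs; auto; intros x y Hx Hy; apply Hinj; auto. }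
  all: try (rewrite length_map; auto).
  all: intros y Hy; apply in_map_iff in Hy as [x [<- Hx]]; auto. Qed.
Lemma sumR_bij {A} (l : list A) (phi : A -> A) F :
  NoDup l -> (forall x, In x l -> In (phi x) l) ->
  (forall x y, In x l -> In y l -> phi x = phi y -> x = y) -> sumR l (fun x => F (phi x)) = sumR l F.
Proof. intros. rewrite <- sumR_map. apply sumR_perm, perm_of_bij; auto. Qed.
Lemma avg_bij {A} (l : list A) (phi : A -> A) F :
  NoDup l -> (forall x, In x l -> In (phi x) l) ->
  (forall x y, In x l -> In y l -> phi x = phi y -> x = y) -> avg l (fun x => F (phi x)) = avg l F.
Proof. intros; unfold avg; rewrite sumR_bij; auto. Qed.

Definition upd {A} (g : nat -> A) (i : nat) (s : A) : nat -> A := fun j => if Nat.eqb j i then s else g j.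

Fixpoint prodsp {A} (I : list nat) (L : list A) (d : A) : list (nat -> A) :=
  match I with
  | [] => [fun _ => d]
  | i :: I' => flat_map (fun s => map (fun g => upd g i s) (prodsp I' L d)) L
  end.

Lemma choices_prodsp I n m : choices I n m = prodsp I (msubsets n m) [].
Proof. induction I; simpl; auto. rewrite IHI; auto. Qed.

Lemma prodsp_len {A} I (L : list A) d : length (prodsp I L d) = (length L ^ length I)%nat.
Proof. induction I; simpl; auto. rewrite length_flat_map.
  replace (list_sum (map (fun x => length (map (fun g => upd g a x) (prodsp I L d))) L))
    with (list_sum (map (fun _ => length L ^ length I)%nat L)).
  2:{ f_equal. apply map_ext; intros; rewrite length_map; auto. }
  clear IHI. generalize (length L ^ length I)%nat. intro c. induction L; simpl; [auto | try rewrite IHL; lia]. Qed.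

Lemma prodsp_ne {A} I (L : list A) d : L <> [] -> prodsp I L d <> [].
Proof. intros H E. assert (length (prodsp I L d) = 0%nat) by (rewrite E; auto).
  rewrite prodsp_len in H0. destruct L; [congruence|]. simpl in H0.
  apply Nat.pow_eq_0_iff in H0. lia. Qed.


Lemma list_sum_const {A} (l : list A) c : list_sum (map (fun _ => c) l) = (length l * c)%nat.
Proof. induction l; simpl; [auto| try rewrite IHl; lia]. Qed.

Lemma avg_prodsp_cons {A} i I (L : list A) d F : L <> [] ->
  avg (prodsp (i :: I) L d) F = avg L (fun s => avg (prodsp I L d) (fun g => F (upd g i s))).
Proof. intros HL. unfold avg. simpl prodsp. rewrite sumR_flat_map.
  rewrite length_flat_map.
  rewrite (map_ext _ (fun _ => length (prodsp I L d))) by (intros; apply length_map).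
  rewrite list_sum_const.
  rewrite mult_INR. pose proof (INR_len_pos _ HL). pose proof (INR_len_pos _ (prodsp_ne I L d HL)).
  unfold Rdiv. rewrite (Rmult_comm _ (/ INR (length L))), <- sumR_scal.
  rewrite Rinv_mult, <- Rmult_assoc, (Rmult_comm _ (/ INR (length L))), Rmult_assoc.
  rewrite (Rmult_comm (sumR _ _)), <- Rmult_assoc, <- sumR_scal. apply sumR_ext; intros. rewrite sumR_map; ring. Qed.

Lemma prodsp_nil {A} (L : list A) d F : avg (prodsp [] L d) F = F (fun _ => d).
Proof. unfold avg; simpl. unfold sumR; simpl. field. Qed.

Lemma prod_transfer {A B} (Rel : A -> A -> Prop) (Rrefl : forall a, Rel a a)
  (L1 : list A) (L2 : list B) d1 d2 (psi : nat -> B -> A) (I : list nat) :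
  L1 <> [] -> L2 <> [] ->
  (forall i, In i I -> forall G : A -> R, (forall a a', Rel a a' -> G a = G a') ->
      avg L1 G = avg L2 (fun b => G (psi i b))) ->
  forall F : (nat -> A) -> R, (forall x y, (forall i, In i I -> Rel (x i) (y i)) -> F x = F y) ->
  avg (prodsp I L1 d1) F = avg (prodsp I L2 d2) (fun y => F (fun j => psi j (y j))).
Proof.
  intros H1 H2 Hc. induction I as [|i I IH]; intros F HF.
  - rewrite !prodsp_nil. apply HF. intros i [].
  - rewrite !avg_prodsp_cons by auto.
    transitivity (avg L1 (fun s => avg (prodsp I L2 d2) (fun y => F (upd (fun j => psi j (y j)) i s)))).
    { apply avg_ext; intros s Hs. apply (IH (fun i Hi => Hc i (or_intror Hi)) (fun x => F (upd x i s))).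
      intros x y Hxy. apply HF. intros j Hj. unfold upd. destruct (Nat.eqb j i) eqn:E; auto.
      apply Nat.eqb_neq in E. destruct Hj; [congruence|]. auto. }
    rewrite avg_swap, (avg_swap L2).
    apply avg_ext; intros y Hy.
    rewrite (Hc i (or_introl eq_refl) (fun s => F (upd (fun j => psi j (y j)) i s))).
    + apply avg_ext; intros b Hb. f_equal. apply functional_extensionality; intro j.
      unfold upd. destruct (Nat.eqb j i) eqn:E; auto. apply Nat.eqb_eq in E; subst; auto.
    + intros a a' Ha. apply HF. intros j Hj. unfold upd. destruct (Nat.eqb j i); auto.
Qed.

Lemma prod_exp_le {A} (L : list A) d (I : list nat) (Y : nat -> A -> R) (c : nat -> R) :
  NoDup I -> L <> [] ->
  (forall i, In i I -> avg L (fun b => exp (Y i b)) <= exp (c i)) ->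
  avg (prodsp I L d) (fun x => exp (sumR I (fun i => Y i (x i)))) <= exp (sumR I c).
Proof.
  intros HI HL. induction I as [|i I IH]; intros Hc.
  - rewrite prodsp_nil. unfold sumR; simpl; lra.
  - inversion HI; subst. rewrite avg_prodsp_cons by auto.
    transitivity (avg L (fun s => exp (Y i s) * avg (prodsp I L d) (fun x => exp (sumR I (fun j => Y j (x j)))))).
    { right. apply avg_ext; intros s Hs. rewrite <- avg_scal. apply avg_ext; intros x Hx.
      rewrite sumR_cons, exp_plus. f_equal.
      - unfold upd; rewrite Nat.eqb_refl; auto.
      - f_equal. apply sumR_ext; intros j Hj. unfold upd. destruct (Nat.eqb j i) eqn:E; auto.
        apply Nat.eqb_eq in E; subst; contradiction. }
    rewrite sumR_cons, exp_plus.
    rewrite (Rmult_comm (exp (c i))).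
    transitivity (avg L (fun s => exp (Y i s) * exp (sumR I c))).
    { apply avg_le; intros s Hs. apply Rmult_le_compat_l. left; apply exp_pos.
      apply IH; auto. intros; apply Hc; right; auto. }
    rewrite (avg_ext _ _ (fun s => exp (sumR I c) * exp (Y i s))) by (intros; ring).
    rewrite avg_scal. apply Rmult_le_compat_l. left; apply exp_pos. apply Hc; left; auto.
Qed.

Fixpoint tuples (n L : nat) : list (list nat) :=
  match L with
  | O => [[]]
  | S L' => flat_map (fun a => map (cons a) (tuples n L')) (seq 0 n)
  end.

Lemma tuples_in n L t : In t (tuples n L) <-> length t = L /\ (forall x, In x t -> (x < n)%nat).
Proof. revert t; induction L; intros t; simpl.
  - split. intros [<-|[]]; simpl; split; auto; intros x [].
    intros [H _]; destruct t; simpl in *; auto; lia.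
  - rewrite in_flat_map. split.
    + intros [a [Ha Ht]]. apply in_map_iff in Ht as [t' [<- Ht']]. apply IHL in Ht' as [H1 H2].
      apply in_seq in Ha. simpl; split; auto. intros x [<-|Hx]; auto; lia.
    + intros [H1 H2]. destruct t as [|a t']; simpl in H1; [lia|]. exists a; split.
      apply in_seq; split; [lia|]. simpl. specialize (H2 a (or_introl eq_refl)); lia.
      apply in_map. apply IHL. split; auto. intros; apply H2; right; auto.
Qed.

Lemma tuples_nodup n L : NoDup (tuples n L).
Proof. induction L; simpl. constructor; auto. constructor.
  assert (Hs := seq_NoDup n 0). generalize dependent (seq 0 n). intros l Hl.
  induction l; simpl. constructor. inversion Hl; subst. apply NoDup_app.
  - apply NoDup_map_NoDup_ForallPairs; auto. intros x y _ _ E; injection E; auto.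
  - apply IHl; auto.
  - intros t Ht1 Ht2. apply in_map_iff in Ht1 as [t1 [<- _]].
    apply in_flat_map in Ht2 as [b [Hb Ht]]. apply in_map_iff in Ht as [t2 [E _]].
    injection E; intros; subst. contradiction.
Qed.

Definition nodupb (l : list nat) : bool := if NoDup_dec Nat.eq_dec l then true else false.
Definition permsn (n : nat) : list (list nat) := filter nodupb (tuples n n).

Lemma permsn_in n g : In g (permsn n) <-> length g = n /\ (forall x, In x g -> (x < n)%nat) /\ NoDup g.
Proof. unfold permsn. rewrite filter_In, tuples_in. unfold nodupb.
  destruct (NoDup_dec Nat.eq_dec g); intuition congruence. Qed.

Lemma permsn_nodup n : NoDup (permsn n).
Proof. apply NoDup_filter, tuples_nodup. Qed.

Lemma perm_seq_iff n g : In g (permsn n) <-> Permutation g (seq 0 n).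
Proof. rewrite permsn_in. split.
  - intros [H1 [H2 H3]]. apply NoDup_Permutation_bis; auto. rewrite length_seq; lia.
    intros x Hx; apply in_seq; specialize (H2 x Hx); lia.
  - intros HP. split; [rewrite (Permutation_length HP), length_seq; auto|]. split.
    intros x Hx. apply (Permutation_in _ HP), in_seq in Hx. lia.
    apply (Permutation_NoDup (Permutation_sym HP)), seq_NoDup. Qed.

Lemma permsn_ne n : permsn n <> [].
Proof. intro E. assert (In (seq 0 n) (permsn n)) by (apply perm_seq_iff; auto). rewrite E in H; auto. Qed.

Definition nth0 (g : list nat) (j : nat) : nat := nth j g 0%nat.
Definition comp (g tau : list nat) : list nat := map (nth0 g) tau.

Lemma map_eq_in {A B} (f1 f2 : A -> B) l : map f1 l = map f2 l -> forall x, In x l -> f1 x = f2 x.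
Proof. induction l; simpl; intros E x Hx; [contradiction|]. injection E; intros E2 E1.
  destruct Hx; subst; auto. Qed.

Lemma comp_in n g tau : In g (permsn n) -> In tau (permsn n) -> In (comp g tau) (permsn n).
Proof. rewrite !permsn_in. intros [G1 [G2 G3]] [T1 [T2 T3]]. unfold comp. split; [rewrite length_map; auto|]. split.
  - intros x Hx. apply in_map_iff in Hx as [j [<- Hj]]. apply G2. unfold nth0. apply nth_In. rewrite G1; auto.
  - apply NoDup_map_NoDup_ForallPairs; auto. intros x y Hx Hy E. unfold nth0 in E.
    apply (NoDup_nth g 0%nat) in E; auto; rewrite G1; auto. Qed.

Lemma comp_inj n g g' tau : In g (permsn n) -> In g' (permsn n) -> In tau (permsn n) -> comp g tau = comp g' tau -> g = g'.
Proof. intros Hg Hg' Ht E. apply permsn_in in Hg as [G1 _]. apply permsn_in in Hg' as [G1' _].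
  apply perm_seq_iff in Ht. apply (nth_ext _ _ 0%nat 0%nat). congruence.
  intros j Hj. apply (map_eq_in _ _ _ E). apply (Permutation_in _ (Permutation_sym Ht)), in_seq. lia. Qed.

Lemma avg_comp n tau (F : list nat -> R) : In tau (permsn n) ->
  avg (permsn n) (fun g => F (comp g tau)) = avg (permsn n) F.
Proof. intros. apply avg_bij. apply permsn_nodup. intros; apply comp_in; auto.
  intros x y Hx Hy; eapply comp_inj; eauto. Qed.

Lemma map_seq_perm n (f : nat -> nat) : (forall j, (j < n)%nat -> (f j < n)%nat) ->
  (forall i j, (i < n)%nat -> (j < n)%nat -> f i = f j -> i = j) -> In (map f (seq 0 n)) (permsn n).
Proof. intros H1 H2. apply permsn_in. split; [rewrite length_map, length_seq; auto|]. split.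
  intros x Hx. apply in_map_iff in Hx as [j [<- Hj]]. apply in_seq in Hj; apply H1; lia.
  apply NoDup_map_NoDup_ForallPairs. intros x y Hx Hy; apply in_seq in Hx; apply in_seq in Hy; apply H2; lia.
  apply seq_NoDup. Qed.

Lemma nth_comp_map g n f j : (j < n)%nat -> nth0 (comp g (map f (seq 0 n))) j = nth0 g (f j).
Proof. intros. unfold comp, nth0. rewrite map_map. rewrite (nth_indep _ 0%nat (nth (f 0%nat) g 0%nat)).
  rewrite (map_nth (fun x => nth (f x) g 0%nat) (seq 0 n) 0%nat j). rewrite seq_nth; auto.
  rewrite length_map, length_seq; auto. Qed.

Lemma sumR_seq_bij m (f : nat -> nat) F : (forall j, (j < m)%nat -> (f j < m)%nat) ->
  (forall i j, (i < m)%nat -> (j < m)%nat -> f i = f j -> i = j) ->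
  sumR (seq 0 m) (fun j => F (f j)) = sumR (seq 0 m) F.
Proof. intros. apply sumR_bij. apply seq_NoDup. intros x Hx; apply in_seq in Hx; apply in_seq; specialize (H x); lia.
  intros x y Hx Hy; apply in_seq in Hx; apply in_seq in Hy; apply H0; lia. Qed.

Fixpoint allmasks (L : nat) : list (list bool) :=
  match L with
  | O => [[]]
  | S L' => map (cons false) (allmasks L') ++ map (cons true) (allmasks L')
  end.

Lemma allmasks_in L b : In b (allmasks L) <-> length b = L.
Proof. revert b; induction L; intros b; simpl.
  - split. intros [<-|[]]; auto. destruct b; simpl; auto; lia.
  - rewrite in_app_iff, !in_map_iff. split.
    + intros [[b' [<- Hb]]|[b' [<- Hb]]]; apply IHL in Hb; simpl; auto.
    + intros H. destruct b as [|x b']; simpl in H; [lia|]. injection H; intros H'.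
      destruct x; [right|left]; exists b'; split; auto; apply IHL; auto. Qed.

Lemma allmasks_nodup L : NoDup (allmasks L).
Proof. induction L; simpl. constructor; auto. constructor. apply NoDup_app.
  1,2: apply NoDup_map_NoDup_ForallPairs; auto; intros x y _ _ E; injection E; auto.
  intros a H1 H2. apply in_map_iff in H1 as [? [<- _]]. apply in_map_iff in H2 as [? [E _]]. discriminate. Qed.

Lemma allmasks_ne L : allmasks L <> [].
Proof. intro E. assert (In (repeat false L) (allmasks L)) by (apply allmasks_in, repeat_length). rewrite E in H; auto. Qed.

Lemma avg_allmasks_S L F : avg (allmasks (S L)) F = (avg (allmasks L) (fun b => F (false :: b)) + avg (allmasks L) (fun b => F (true :: b))) / 2.
Proof. unfold avg. simpl allmasks. rewrite sumR_app, !sumR_map, length_app, !length_map, plus_INR.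
  pose proof (INR_len_pos _ (allmasks_ne L)). field. lra. Qed.

Lemma ss_forall a l : StronglySorted lt (a :: l) -> forall x, In x l -> (a < x)%nat.
Proof. intros H x Hx. inversion H; subst. eapply Forall_forall in H3; eauto. Qed.

Lemma msub_in lo n m s : In s (msubsets_from lo n m) <->
  StronglySorted lt s /\ length s = m /\ (forall x, In x s -> (lo <= x < lo + n)%nat).
Proof.
  revert lo m s. induction n as [|n IH]; intros lo m s.
  - destruct m; simpl.
    + split. intros [<-|[]]. split; [constructor|]. split; auto. intros x [].
      intros [_ [H _]]. destruct s; simpl in *; auto; lia.
    + split; [intros []|]. intros [_ [H1 H2]]. destruct s; simpl in *; [lia|].
      specialize (H2 n (or_introl eq_refl)); lia.
  - destruct m as [|m]; simpl.
    + split. intros [<-|[]]. split; [constructor|]. split; auto. intros x [].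
      intros [_ [H _]]. destruct s; simpl in *; auto; lia.
    + rewrite in_app_iff, in_map_iff. split.
      * intros [[s' [<- Hs]]|Hs].
        -- apply IH in Hs as [H1 [H2 H3]]. split; [|split; simpl; auto].
           constructor; auto. apply Forall_forall; intros x Hx; specialize (H3 x Hx); lia.
           intros x [<-|Hx]; [lia|]. specialize (H3 x Hx); lia.
        -- apply IH in Hs as [H1 [H2 H3]]. split; auto. split; auto. intros x Hx; specialize (H3 x Hx); lia.
      * intros [H1 [H2 H3]]. destruct s as [|a s']; simpl in H2; [lia|].
        assert (Ha := H3 a (or_introl eq_refl)).
        destruct (Nat.eq_dec a lo) as [->|Hne].
        -- left. exists s'. split; auto. apply IH. inversion H1; subst. split; auto. split; [lia|].
           intros x Hx. assert (lo < x)%nat by (eapply ss_forall; eauto). specialize (H3 x (or_intror Hx)). lia.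
        -- right. apply IH. split; auto. split; auto. intros x [<-|Hx]; [lia|].
           assert (a < x)%nat by (eapply ss_forall; eauto). specialize (H3 x (or_intror Hx)). lia.
Qed.

Lemma msub_nodup lo n m : NoDup (msubsets_from lo n m).
Proof.
  revert lo m. induction n as [|n IH]; intros lo m.
  - destruct m; simpl; constructor; auto; constructor.
  - destruct m; simpl. constructor; auto; constructor.
    apply NoDup_app. apply NoDup_map_NoDup_ForallPairs; auto. intros x y _ _ E; injection E; auto.
    apply IH. intros s H1 H2. apply in_map_iff in H1 as [s' [<- _]]. apply msub_in in H2 as [_ [_ H2]].
    specialize (H2 lo (or_introl eq_refl)). lia.
Qed.

Lemma ss_unique l1 l2 : StronglySorted lt l1 -> StronglySorted lt l2 -> (forall x, In x l1 <-> In x l2) -> l1 = l2.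
Proof.
  revert l2; induction l1 as [|a l1 IH]; intros l2 H1 H2 He.
  - destruct l2; auto. exfalso. apply (proj2 (He n)); left; auto.
  - destruct l2 as [|b l2]. exfalso; apply (proj1 (He a)); left; auto.
    assert (a = b).
    { destruct (proj1 (He a) (or_introl eq_refl)) as [|Ha]; auto.
      destruct (proj2 (He b) (or_introl eq_refl)) as [|Hb]; auto.
      assert (b < a)%nat by (eapply ss_forall; eauto). assert (a < b)%nat by (eapply ss_forall; eauto). lia. }
    subst. f_equal. pose proof (ss_forall _ _ H1) as F1. pose proof (ss_forall _ _ H2) as F2.
    inversion H1; inversion H2; subst. apply IH; auto. intros x. split; intros Hx.
    + destruct (proj1 (He x) (or_intror Hx)) as [<-|]; auto. specialize (F1 _ Hx); lia.
    + destruct (proj2 (He x) (or_intror Hx)) as [<-|]; auto. specialize (F2 _ Hx); lia.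
Qed.

Lemma ss_nodup l : StronglySorted lt l -> NoDup l.
Proof. induction l; intros H; constructor. intros Ha. assert (a < a)%nat by (eapply ss_forall; eauto); lia.
  inversion H; auto. Qed.

Lemma ss_filter_seq f a n : StronglySorted lt (filter f (seq a n)).
Proof. revert a; induction n; intros a; simpl. constructor. destruct (f a); auto. constructor; auto.
  apply Forall_forall; intros x Hx. apply filter_In in Hx as [Hx _]. apply in_seq in Hx; lia. Qed.

Definition memb (l : list nat) (j : nat) : bool := if in_dec Nat.eq_dec j l then true else false.
Definition norm (n : nat) (l : list nat) : list nat := filter (memb l) (seq 0 n).

Lemma memb_true l j : memb l j = true <-> In j l.
Proof. unfold memb; destruct (in_dec Nat.eq_dec j l); intuition congruence. Qed.

Lemma norm_perm n l : NoDup l -> (forall x, In x l -> (x < n)%nat) -> Permutation (norm n l) l.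
Proof. intros. apply NoDup_Permutation; auto. apply NoDup_filter, seq_NoDup.
  intros x. unfold norm; rewrite filter_In, memb_true, in_seq. split; [tauto|]. intros; split; auto. specialize (H0 x H1); lia. Qed.

Lemma filter_split_perm {A} (f : A -> bool) l : Permutation (filter f l ++ filter (fun x => negb (f x)) l) l.
Proof. induction l; simpl; auto. destruct (f a); simpl. constructor; auto.
  eapply perm_trans. apply Permutation_sym, Permutation_middle. constructor; auto. Qed.

Lemma ms_ne n m : (m <= n)%nat -> msubsets n m <> [].
Proof. intros H E. assert (In (seq 0 m) (msubsets n m)).
  { apply msub_in. split. apply (ss_filter_seq (fun _ => true) 0 m) || (rewrite <- (filter_true (seq 0 m)) ; apply ss_filter_seq).
    split. apply length_seq. intros x Hx; apply in_seq in Hx; lia. }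
  rewrite E in H0; auto. Qed.

Lemma nth0_inj n g i j : In g (permsn n) -> (i < n)%nat -> (j < n)%nat -> nth0 g i = nth0 g j -> i = j.
Proof. intros Hg Hi Hj E. apply permsn_in in Hg as [G1 [_ G3]]. unfold nth0 in E.
  apply (NoDup_nth g 0%nat) in E; auto; rewrite G1; auto. Qed.
Lemma nth0_lt n g i : In g (permsn n) -> (i < n)%nat -> (nth0 g i < n)%nat.
Proof. intros Hg Hi. apply permsn_in in Hg as [G1 [G2 _]]. apply G2. unfold nth0; apply nth_In; lia. Qed.

Lemma ms_props n m s : In s (msubsets n m) -> NoDup s /\ length s = m /\ (forall x, In x s -> (x < n)%nat).
Proof. intros H. apply msub_in in H as [H1 [H2 H3]]. split; [apply ss_nodup; auto|]. split; auto.
  intros x Hx; specialize (H3 x Hx); lia. Qed.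

Lemma map_g_props n m g s : In g (permsn n) -> In s (msubsets n m) ->
  NoDup (map (nth0 g) s) /\ length (map (nth0 g) s) = m /\ (forall x, In x (map (nth0 g) s) -> (x < n)%nat).
Proof. intros Hg Hs. destruct (ms_props _ _ _ Hs) as [S1 [S2 S3]]. split; [|split].
  - apply NoDup_map_NoDup_ForallPairs; auto. intros x y Hx Hy. apply (nth0_inj n); auto.
  - rewrite length_map; auto.
  - intros x Hx. apply in_map_iff in Hx as [j [<- Hj]]. apply (nth0_lt n); auto. Qed.

Lemma norm_in_ms n m l : NoDup l -> length l = m -> (forall x, In x l -> (x < n)%nat) -> In (norm n l) (msubsets n m).
Proof. intros H1 H2 H3. apply msub_in. split. apply ss_filter_seq. split.
  rewrite (Permutation_length (norm_perm n l H1 H3)); auto.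
  intros x Hx. unfold norm in Hx. apply filter_In in Hx as [Hx _]. apply in_seq in Hx. lia. Qed.

Lemma ms_invariant n m g (G : list nat -> R) : In g (permsn n) ->
  (forall s s', Permutation s s' -> G s = G s') ->
  avg (msubsets n m) G = avg (msubsets n m) (fun s => G (map (nth0 g) s)).
Proof.
  intros Hg HG.
  transitivity (avg (msubsets n m) (fun s => G (norm n (map (nth0 g) s)))).
  - symmetry. apply avg_bij. apply msub_nodup.
    + intros s Hs. destruct (map_g_props n m g s Hg Hs) as [P1 [P2 P3]]. apply norm_in_ms; auto.
    + intros s s' Hs Hs' E. destruct (map_g_props n m g s Hg Hs) as [P1 [P2 P3]].
      destruct (map_g_props n m g s' Hg Hs') as [P1' [P2' P3']].
      pose proof (norm_perm _ _ P1 P3) as Q1. pose proof (norm_perm _ _ P1' P3') as Q2. rewrite E in Q1.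
      destruct (ms_props _ _ _ Hs) as [_ [_ S3]]. destruct (ms_props _ _ _ Hs') as [_ [_ S3']].
      apply msub_in in Hs as [SS1 _]. apply msub_in in Hs' as [SS2 _].
      apply ss_unique; auto. intros j. split; intros Hj.
      * assert (In (nth0 g j) (map (nth0 g) s')).
        { apply (Permutation_in _ Q2), (Permutation_in _ (Permutation_sym Q1)), in_map; auto. }
        apply in_map_iff in H as [j' [E' Hj']]. apply (nth0_inj n g) in E'; auto. subst; auto.
      * assert (In (nth0 g j) (map (nth0 g) s)).
        { apply (Permutation_in _ Q1), (Permutation_in _ (Permutation_sym Q2)), in_map; auto. }
        apply in_map_iff in H as [j' [E' Hj']]. apply (nth0_inj n g) in E'; auto. subst; auto.
  - apply avg_ext; intros s Hs. apply HG. destruct (map_g_props n m g s Hg Hs) as [P1 [P2 P3]].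
    apply norm_perm; auto.
Qed.

Definition pis (n : nat) (s : list nat) : list nat := s ++ filter (fun j => negb (memb s j)) (seq 0 n).

Lemma pis_in n m s : In s (msubsets n m) -> In (pis n s) (permsn n).
Proof. intros Hs. destruct (ms_props _ _ _ Hs) as [S1 [S2 S3]]. apply perm_seq_iff. unfold pis.
  eapply perm_trans; [|apply (filter_split_perm (memb s))]. apply Permutation_app_tail.
  apply Permutation_sym, norm_perm; auto. Qed.

Lemma S1_single n m (G : list nat -> R) : (m <= n)%nat ->
  (forall s s', Permutation s s' -> G s = G s') ->
  avg (msubsets n m) G = avg (permsn n) (fun g => G (firstn m g)).
Proof.
  intros Hmn HG.
  transitivity (avg (permsn n) (fun g => avg (msubsets n m) (fun s => G (map (nth0 g) s)))).
  { rewrite <- (avg_const (permsn n) (avg (msubsets n m) G)) by apply permsn_ne.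
    apply avg_ext; intros g Hg. apply ms_invariant; auto. }
  rewrite avg_swap.
  rewrite <- (avg_const (msubsets n m) (avg (permsn n) (fun g => G (firstn m g)))) by (apply ms_ne; auto).
  apply avg_ext; intros s Hs.
  rewrite <- (avg_comp n (pis n s) (fun g => G (firstn m g))) by (eapply pis_in; eauto).
  apply avg_ext; intros g Hg. f_equal. unfold comp, pis. rewrite map_app, firstn_app.
  destruct (ms_props _ _ _ Hs) as [_ [S2 _]]. rewrite length_map, S2, Nat.sub_diag. simpl.
  rewrite app_nil_r, firstn_all2; auto. rewrite length_map; lia.
Qed.

Lemma Rsup_lub (E : R -> Prop) : bound E -> (exists x, E x) -> is_lub E (Rsup E).
Proof. intros Hb He. destruct (completeness E Hb He) as [s Hs].
  unfold Rsup. apply epsilon_spec. exists s; auto. Qed.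

Section SupH.
Variable X : Type.
Variable H : (X -> bool) -> Prop.
Hypothesis Hne : exists h, H h.

Definition supH (g : (X -> bool) -> R) : R := Rsup (fun v => exists h, H h /\ v = g h).
Definition bndH (g : (X -> bool) -> R) : Prop := exists M, forall h, H h -> Rabs (g h) <= M.

Lemma supH_lub g : bndH g -> is_lub (fun v => exists h, H h /\ v = g h) (supH g).
Proof. intros [M HM]. apply Rsup_lub. exists M. intros v [h [Hh ->]]. specialize (HM h Hh).
  pose proof (Rle_abs (g h)); lra. destruct Hne as [h Hh]. exists (g h), h; auto. Qed.

Lemma supH_ub g h : bndH g -> H h -> g h <= supH g.
Proof. intros Hb Hh. apply (proj1 (supH_lub g Hb)). exists h; auto. Qed.

Lemma supH_le g c : bndH g -> (forall h, H h -> g h <= c) -> supH g <= c.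
Proof. intros Hb Hc. apply (proj2 (supH_lub g Hb)). intros v [h [Hh ->]]; auto. Qed.

Lemma bndH_const c : bndH (fun _ => c).
Proof. exists (Rabs c); intros; lra. Qed.
Lemma bndH_plus g1 g2 : bndH g1 -> bndH g2 -> bndH (fun h => g1 h + g2 h).
Proof. intros [M1 H1] [M2 H2]. exists (M1 + M2); intros h Hh.
  eapply Rle_trans. apply Rabs_triang. specialize (H1 h Hh); specialize (H2 h Hh); lra. Qed.
Lemma bndH_minus g1 g2 : bndH g1 -> bndH g2 -> bndH (fun h => g1 h - g2 h).
Proof. intros [M1 H1] [M2 H2]. exists (M1 + M2); intros h Hh.
  eapply Rle_trans. apply Rabs_triang. rewrite Rabs_Ropp. specialize (H1 h Hh); specialize (H2 h Hh); lra. Qed.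
Lemma bndH_scal c g : bndH g -> bndH (fun h => c * g h).
Proof. intros [M1 H1]. exists (Rabs c * M1); intros h Hh. rewrite Rabs_mult.
  apply Rmult_le_compat_l. apply Rabs_pos. auto. Qed.
Lemma bndH_sumR {A} (l : list A) (g : A -> (X -> bool) -> R) : (forall a, In a l -> bndH (g a)) ->
  bndH (fun h => sumR l (fun a => g a h)).
Proof. induction l; intros Hg. - exists 0; intros; rewrite sumR_nil, Rabs_R0; lra.
  - assert (bndH (fun h => g a h + sumR l (fun a0 => g a0 h))).
    { apply bndH_plus. apply Hg; left; auto. apply IHl; intros; apply Hg; right; auto. }
    destruct H0 as [M HM]; exists M; intros h Hh; rewrite sumR_cons; auto. Qed.
Lemma bndH_loss (v : X -> bool) (x : X) : bndH (fun h => loss01 (h x) (v x)).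
Proof. exists 1; intros h _. unfold loss01. destruct (Bool.eqb _ _); rewrite ?Rabs_R0, ?Rabs_R1; lra. Qed.

Lemma supH_avg {A} (L : list A) (g : A -> (X -> bool) -> R) c : L <> [] -> 0 <= c ->
  (forall a, In a L -> bndH (g a)) ->
  supH (fun h => c * avg L (fun a => g a h)) <= c * avg L (fun a => supH (g a)).
Proof. intros HL Hc Hb. apply supH_le.
  - apply bndH_scal. unfold avg. unfold Rdiv. destruct (bndH_sumR L g Hb) as [M HM].
    exists (M * Rabs (/ INR (length L))). intros h Hh. rewrite Rabs_mult. apply Rmult_le_compat_r; auto. apply Rabs_pos.
  - intros h Hh. apply Rmult_le_compat_l; auto. apply avg_le. intros a Ha. apply supH_ub; auto.
Qed.

Lemma supH_plus g1 g2 : bndH g1 -> bndH g2 -> supH (fun h => g1 h + g2 h) <= supH g1 + supH g2.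
Proof. intros. apply supH_le. apply bndH_plus; auto. intros h Hh.
  pose proof (supH_ub g1 h H0 Hh). pose proof (supH_ub g2 h H1 Hh). lra. Qed.

Lemma supH_mono g1 g2 : bndH g1 -> bndH g2 -> (forall h, H h -> g1 h <= g2 h) -> supH g1 <= supH g2.
Proof. intros. apply supH_le; auto. intros h Hh. eapply Rle_trans; [apply H2; auto|]. apply supH_ub; auto. Qed.

Lemma supH_ext g1 g2 : bndH g1 -> bndH g2 -> (forall h, H h -> g1 h = g2 h) -> supH g1 = supH g2.
Proof. intros. apply Rle_antisym; apply supH_mono; auto; intros; rewrite H2; auto; lra. Qed.

Lemma supH_scal c g : 0 <= c -> bndH g -> supH (fun h => c * g h) <= c * supH g.
Proof. intros. apply supH_le. apply bndH_scal; auto. intros h Hh. apply Rmult_le_compat_l; auto. apply supH_ub; auto. Qed.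

End SupH.

Module CoshM.
From Coquelicot Require Import Coquelicot.

Lemma incr_from_deriv (f f' : R -> R) a :
  (forall x, derivable_pt_lim f x (f' x)) -> (forall x, a <= x -> 0 <= f' x) ->
  forall x, a <= x -> f a <= f x.
Proof.
  intros Hd Hp x Hx.
  pose (pr := fun y => exist (fun l => derivable_pt_abs f y l) (f' y) (Hd y) : derivable_pt f y).
  destruct Hx as [Hx| <-]; [|lra].
  destruct (MVT_cor1 f a x pr Hx) as [c [Hc1 Hc2]].
  assert (E : derive_pt f c (pr c) = f' c) by reflexivity.
  rewrite E in Hc1. assert (0 <= f' c) by (apply Hp; lra).
  nra.
Qed.

Lemma cosh_le_exp_sq (u : R) : (exp u + exp (- u)) / 2 <= exp (u ^ 2 / 2).
Proof.
  assert (Hpos : forall v, 0 <= v -> (exp v + exp (- v)) / 2 <= exp (v ^ 2 / 2)).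
  { intros v Hv.
    assert (Hr : forall w, 0 <= w -> 0 <= w * ((exp w + exp (-w))/2) - (exp w - exp (-w))/2).
    { intros w Hw.
      assert (H0 := incr_from_deriv (fun w => w * ((exp w + exp (-w))/2) - (exp w - exp (-w))/2)
                     (fun w => w * ((exp w - exp (-w))/2)) 0).
      simpl in H0.
      assert (E0 : 0 * ((exp 0 + exp (-0))/2) - (exp 0 - exp (-0))/2 = 0).
      { rewrite Ropp_0, exp_0. lra. }
      rewrite E0 in H0. apply H0; auto.
      - intros x. apply is_derive_Reals. auto_derive; auto. lra.
      - intros x Hx. apply Rmult_le_pos; auto.
        assert (exp (-x) <= exp x) by (destruct (Req_dec x 0) as [->|]; [rewrite Ropp_0; lra| left; apply exp_increasing; lra]). lra. }
    assert (H0 := incr_from_deriv (fun w => 1 - ((exp w + exp (-w))/2) * exp (- (w^2/2)))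
                     (fun w => exp (- (w^2/2)) * (w * ((exp w + exp (-w))/2) - (exp w - exp (-w))/2)) 0).
    simpl in H0.
    assert (E0 : 1 - (exp 0 + exp (- 0)) / 2 * exp (- (0 * (0 * 1) / 2)) = 0).
    { replace (- (0 * (0 * 1) / 2)) with 0 by lra. rewrite Ropp_0, exp_0. lra. }
    rewrite E0 in H0.
    assert (H1 : 0 <= 1 - (exp v + exp (- v)) / 2 * exp (- (v * (v * 1) / 2))).
    { apply H0; auto.
      - intros x. apply is_derive_Reals. auto_derive; auto. lra.
      - intros x Hx. apply Rmult_le_pos. left; apply exp_pos. apply Hr; auto. }
    assert (E : exp (- (v * (v * 1) / 2)) * exp (v ^ 2 / 2) = 1).
    { rewrite <- exp_plus. replace (- (v * (v * 1) / 2) + v ^ 2 / 2) with 0 by field. apply exp_0. }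
    assert (P := exp_pos (v^2/2)).
    nra. }
  destruct (Rle_dec 0 u).
  - apply Hpos; auto.
  - replace (u^2) with ((-u)^2) by field.
    replace ((exp u + exp (- u)) / 2) with ((exp (-u) + exp (- - u)) / 2) by (rewrite Ropp_involutive; lra).
    apply Hpos; lra.
Qed.
End CoshM.

Lemma exp_le' x y : x <= y -> exp x <= exp y.
Proof. intros [H | ->]; [left; apply exp_increasing; auto|lra]. Qed.
Lemma ln_le' x y : 0 < x -> x <= y -> ln x <= ln y.
Proof. intros Hx [H | ->]; [left; apply ln_increasing; auto|lra]. Qed.
Lemma ln_le_sub1 x : 0 < x -> ln x <= x - 1.
Proof. intros. pose proof (exp_ineq1_le (ln x)). rewrite exp_ln in H0; auto. lra. Qed.

Lemma sumR_ge_term {A} (l : list A) F x : In x l -> (forall y, In y l -> 0 <= F y) -> F x <= sumR l F.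
Proof. induction l; intros Hx Hp; [contradiction|]. rewrite sumR_cons. destruct Hx as [-> | Hx].
  - pose proof (sumR_nonneg l F (fun y Hy => Hp y (or_intror Hy))). lra.
  - pose proof (Hp a (or_introl eq_refl)). pose proof (IHl Hx (fun y Hy => Hp y (or_intror Hy))). lra. Qed.

Lemma avg_ln_le {A} (L : list A) Z : L <> [] -> (forall x, In x L -> 0 < Z x) ->
  avg L (fun x => ln (Z x)) <= ln (avg L Z).
Proof. intros HL HZ. set (mu := avg L Z).
  assert (Hmu : 0 < mu).
  { unfold mu, avg. apply Rdiv_lt_0_compat; [|apply INR_len_pos; auto].
    destruct L as [|a L]; [congruence|]. rewrite sumR_cons. pose proof (HZ a (or_introl eq_refl)).
    pose proof (sumR_nonneg L Z (fun y Hy => Rlt_le _ _ (HZ y (or_intror Hy)))). lra. }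
  transitivity (avg L (fun x => ln mu + (Z x / mu - 1))).
  { apply avg_le; intros x Hx. pose proof (HZ x Hx).
    pose proof (ln_le_sub1 (Z x / mu) (Rdiv_lt_0_compat _ _ H Hmu)).
    unfold Rdiv in H0. rewrite ln_mult, ln_Rinv in H0; auto. unfold Rdiv; lra. apply Rinv_0_lt_compat; auto. }
  rewrite avg_plus, avg_const by auto. unfold Rdiv. rewrite (avg_ext L _ (fun x => / mu * Z x + - 1)) by (intros; ring).
  rewrite avg_plus, avg_scal, avg_const by auto. fold mu. field_simplify; lra.
Qed.

Definition sg (b : bool) : R := if b then -1 else 1.

Lemma sumR_seq_S p F : sumR (seq 0 (S p)) F = F 0%nat + sumR (seq 0 p) (fun j => F (S j)).
Proof. simpl seq. rewrite sumR_cons, <- seq_shift, sumR_map; auto. Qed.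

Lemma allmasks_exp p (v : nat -> R) lam :
  avg (allmasks p) (fun b => exp (lam * sumR (seq 0 p) (fun j => sg (nth j b false) * v j)))
  <= exp (lam ^ 2 / 2 * sumR (seq 0 p) (fun j => (v j) ^ 2)).
Proof.
  revert v. induction p as [|p IH]; intros v.
  - unfold avg; simpl. unfold sumR; simpl. rewrite !Rmult_0_r, exp_0. lra.
  - rewrite avg_allmasks_S. rewrite sumR_seq_S.
    rewrite (avg_ext _ _ (fun b => exp (lam * sg false * v 0%nat) * exp (lam * sumR (seq 0 p) (fun j => sg (nth j b false) * v (S j)))))
      by (intros; rewrite sumR_seq_S, <- exp_plus; f_equal; simpl; ring).
    rewrite (avg_ext _ (fun b => exp (lam * sumR (seq 0 (S p)) (fun j => sg (nth j (true :: b) false) * v j)))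
       (fun b => exp (lam * sg true * v 0%nat) * exp (lam * sumR (seq 0 p) (fun j => sg (nth j b false) * v (S j)))))
      by (intros; rewrite sumR_seq_S, <- exp_plus; f_equal; simpl; ring).
    rewrite !avg_scal. specialize (IH (fun j => v (S j))).
    set (A0 := avg _ _) in *.
    rewrite Rmult_plus_distr_l, exp_plus.
    assert (0 <= A0) by (apply avg_nonneg; intros; left; apply exp_pos).
    pose proof (CoshM.cosh_le_exp_sq (lam * v 0%nat)).
    unfold sg. replace (lam * -1 * v 0%nat) with (- (lam * v 0%nat)) by ring.
    replace (lam * 1 * v 0%nat) with (lam * v 0%nat) by ring.
    replace (lam ^ 2 / 2 * v 0%nat ^ 2) with ((lam * v 0%nat) ^ 2 / 2) by field.
    transitivity ((exp (lam * v 0%nat) + exp (- (lam * v 0%nat))) / 2 * A0); [right; field|].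
    apply Rmult_le_compat; auto. apply Rmult_le_pos; [|lra]. pose proof (exp_pos (lam * v 0%nat)); pose proof (exp_pos (- (lam * v 0%nat))); lra.
Qed.

Section Massart.
Variable X : Type.
Variable H : (X -> bool) -> Prop.
Hypothesis Hne : exists h, H h.
Variable I : list nat.
Hypothesis HI : NoDup I.
Variable p : nat.
Variable u : (X -> bool) -> nat -> nat -> R.

Definition rsum (sigma : nat -> list bool) (h : X -> bool) : R :=
  sumR I (fun i => sumR (seq 0 p) (fun j => sg (nth j (sigma i) false) * u h i j)).

Lemma massart (Vh : list (X -> bool)) (R2 B : R) :
  (forall h', In h' Vh -> H h') ->
  (forall h, H h -> exists h', In h' Vh /\ forall i j, In i I -> (j < p)%nat -> u h i j = u h' i j) ->
  (forall h, H h -> sumR I (fun i => sumR (seq 0 p) (fun j => (u h i j) ^ 2)) <= R2) ->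
  0 < R2 -> 0 < B -> ln (INR (length Vh)) <= B ->
  avg (prodsp I (allmasks p) []) (fun sigma => supH X H (rsum sigma)) <= sqrt R2 * sqrt (2 * B).
Proof.
  intros HV Hrep Hsq HR2 HB Hln.
  assert (Hrs : forall sigma h, H h -> exists h', In h' Vh /\ rsum sigma h = rsum sigma h').
  { intros sigma h Hh. destruct (Hrep h Hh) as [h' [Hh' He]]. exists h'; split; auto.
    unfold rsum. apply sumR_ext; intros i Hi. apply sumR_ext; intros j Hj. apply in_seq in Hj.
    rewrite He; auto; lia. }
  assert (Hbnd : forall sigma, bndH X H (rsum sigma)).
  { intros sigma. exists (sumR Vh (fun h' => Rabs (rsum sigma h'))). intros h Hh.
    destruct (Hrs sigma h Hh) as [h' [Hh' ->]]. apply (sumR_ge_term Vh (fun h' => Rabs (rsum sigma h'))); auto.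
    intros; apply Rabs_pos. }
  assert (HVne : Vh <> []).
  { destruct Hne as [h Hh]. destruct (Hrep h Hh) as [h' [Hh' _]]. intro E; rewrite E in Hh'; auto. }
  set (lam := sqrt (2 * B) / sqrt R2).
  assert (Hlam : 0 < lam).
  { unfold lam. apply Rdiv_lt_0_compat; apply sqrt_lt_R0; lra. }
  set (Z := fun sigma => sumR Vh (fun h' => exp (lam * rsum sigma h'))).
  assert (HZpos : forall sigma, 0 < Z sigma).
  { intros sigma. unfold Z. destruct Vh as [|h0 Vt]; [congruence|]. rewrite sumR_cons.
    pose proof (exp_pos (lam * rsum sigma h0)).
    pose proof (sumR_nonneg Vt (fun h' => exp (lam * rsum sigma h')) (fun y _ => Rlt_le _ _ (exp_pos _))). lra. }
  assert (Hstep1 : forall sigma, supH X H (rsum sigma) <= ln (Z sigma) / lam).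
  { intros sigma. apply supH_le; auto. intros h Hh. destruct (Hrs sigma h Hh) as [h' [Hh' ->]].
    apply (Rmult_le_reg_l lam); auto. unfold Rdiv. rewrite (Rmult_comm (ln _)), <- Rmult_assoc, Rinv_r, Rmult_1_l by lra.
    rewrite <- (ln_exp (lam * rsum sigma h')). apply ln_le'. apply exp_pos.
    unfold Z. apply (sumR_ge_term Vh (fun h' => exp (lam * rsum sigma h'))); auto. intros; left; apply exp_pos. }
  assert (HEZ : avg (prodsp I (allmasks p) []) Z <= INR (length Vh) * exp (lam ^ 2 / 2 * R2)).
  { unfold Z. rewrite avg_sumR. rewrite <- sumR_const. apply sumR_le. intros h' Hh'.
    transitivity (exp (sumR I (fun i => lam ^ 2 / 2 * sumR (seq 0 p) (fun j => (u h' i j) ^ 2)))).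
    - rewrite (avg_ext _ _ (fun sigma => exp (sumR I (fun i => lam * sumR (seq 0 p) (fun j => sg (nth j (sigma i) false) * u h' i j))))).
      2:{ intros sigma _. unfold rsum. rewrite sumR_scal; auto. }
      apply (prod_exp_le (allmasks p) [] I (fun i b => lam * sumR (seq 0 p) (fun j => sg (nth j b false) * u h' i j))
              (fun i => lam ^ 2 / 2 * sumR (seq 0 p) (fun j => (u h' i j) ^ 2))); auto.
      apply allmasks_ne. intros i Hi. apply allmasks_exp.
    - apply exp_le'. rewrite sumR_scal. apply Rmult_le_compat_l. apply Rmult_le_pos; [apply pow2_ge_0|lra].
      apply Hsq; auto. }
  assert (Hne2 : prodsp I (allmasks p) [] <> []) by (apply prodsp_ne, allmasks_ne).
  transitivity (avg (prodsp I (allmasks p) []) (fun sigma => / lam * ln (Z sigma))).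
  { apply avg_le; intros sigma _. rewrite Rmult_comm; apply Hstep1. }
  rewrite avg_scal.
  transitivity (/ lam * ln (INR (length Vh) * exp (lam ^ 2 / 2 * R2))).
  { apply Rmult_le_compat_l. left; apply Rinv_0_lt_compat; auto.
    eapply Rle_trans. apply avg_ln_le; auto. apply ln_le'; auto.
    unfold avg. apply Rdiv_lt_0_compat. 2:apply INR_len_pos; auto.
    destruct (prodsp I (allmasks p) []) as [|s0 st]; [congruence|]. rewrite sumR_cons.
    pose proof (HZpos s0). pose proof (sumR_nonneg st Z (fun y _ => Rlt_le _ _ (HZpos y))). lra. }
  rewrite ln_mult, ln_exp by (try apply exp_pos; apply INR_len_pos; auto).
  assert (Hl2 : lam ^ 2 = 2 * B / R2).
  { unfold lam. unfold Rdiv. rewrite Rpow_mult_distr, pow_inv. simpl. rewrite !Rmult_1_r.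
    rewrite !sqrt_sqrt by lra. auto. }
  transitivity (/ lam * (B + lam ^ 2 / 2 * R2)).
  { apply Rmult_le_compat_l. left; apply Rinv_0_lt_compat; auto. lra. }
  rewrite Hl2.
  assert (E1 : sqrt R2 * sqrt R2 = R2) by (apply sqrt_sqrt; lra).
  assert (E2 : sqrt (2 * B) * sqrt (2 * B) = 2 * B) by (apply sqrt_sqrt; lra).
  assert (P1 : 0 < sqrt R2) by (apply sqrt_lt_R0; lra).
  assert (P2 : 0 < sqrt (2 * B)) by (apply sqrt_lt_R0; lra).
  unfold lam. right. field_simplify; try lra.
  replace (2 * sqrt R2 * B) with (sqrt R2 * (sqrt (2 * B) * sqrt (2 * B))) by (rewrite E2; ring). field; lra.
Qed.
End Massart.

Fixpoint sel {A} (K : list bool) (l : list A) : list A :=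
  match K, l with
  | true :: K', x :: l' => x :: sel K' l'
  | false :: K', _ :: l' => sel K' l'
  | _, _ => []
  end.

Fixpoint wt (K : list bool) : nat :=
  match K with [] => O | b :: K' => ((if b then 1 else 0) + wt K')%nat end.

Definition shat (V : list (list bool)) (K : list bool) : Prop :=
  forall b, length b = length K -> exists v, In v V /\ sel K v = sel K b.

Definition ind (P : Prop) : R := if excluded_middle_informative P then 1 else 0.

Lemma ind_mono (P Q : Prop) : (P -> Q) -> ind P <= ind Q.
Proof. intros. unfold ind. destruct (excluded_middle_informative P), (excluded_middle_informative Q); try lra; tauto. Qed.
Lemma ind_or_and (P Q : Prop) : ind (P \/ Q) + ind (P /\ Q) = ind P + ind Q.
Proof. unfold ind. destruct (excluded_middle_informative P), (excluded_middle_informative Q),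
  (excluded_middle_informative (P \/ Q)), (excluded_middle_informative (P /\ Q)); try lra; tauto. Qed.
Lemma ind_nonneg P : 0 <= ind P.
Proof. unfold ind; destruct (excluded_middle_informative P); lra. Qed.

Definition cnt (L : nat) (V : list (list bool)) : R := sumR (allmasks L) (fun K => ind (shat V K)).

Definition isF (v : list bool) : bool := match v with false :: _ => true | _ => false end.
Definition isT (v : list bool) : bool := match v with true :: _ => true | _ => false end.

Lemma split_len (V : list (list bool)) : (forall v, In v V -> v <> []) ->
  length V = (length (filter isF V) + length (filter isT V))%nat.
Proof. induction V as [|v V IH]; intros Hv; simpl; auto. destruct v as [|[|] v'].
  - exfalso; apply (Hv [] (or_introl eq_refl)); auto.
  - simpl. rewrite IH; [lia|]. intros; apply Hv; right; auto.
  - simpl. rewrite IH; [lia|]. intros; apply Hv; right; auto. Qed.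

Lemma inF V w : In w (map (@tl bool) (filter isF V)) <-> In (false :: w) V.
Proof. rewrite in_map_iff. split.
  - intros [v [<- Hv]]. apply filter_In in Hv as [Hv Hf]. destruct v as [|[|] v']; simpl in *; try discriminate; auto.
  - intros Hv. exists (false :: w); split; auto. apply filter_In; auto. Qed.
Lemma inT V w : In w (map (@tl bool) (filter isT V)) <-> In (true :: w) V.
Proof. rewrite in_map_iff. split.
  - intros [v [<- Hv]]. apply filter_In in Hv as [Hv Hf]. destruct v as [|[|] v']; simpl in *; try discriminate; auto.
  - intros Hv. exists (true :: w); split; auto. apply filter_In; auto. Qed.

Lemma nodup_tlF (V : list (list bool)) : NoDup V -> NoDup (map (@tl bool) (filter isF V)).
Proof. intros HV. apply NoDup_map_NoDup_ForallPairs; [|apply NoDup_filter; auto].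
  intros x y Hx Hy E. apply filter_In in Hx as [_ Hx]. apply filter_In in Hy as [_ Hy].
  destruct x as [|[|] x']; destruct y as [|[|] y']; simpl in *; try discriminate; subst; auto. Qed.
Lemma nodup_tlT (V : list (list bool)) : NoDup V -> NoDup (map (@tl bool) (filter isT V)).
Proof. intros HV. apply NoDup_map_NoDup_ForallPairs; [|apply NoDup_filter; auto].
  intros x y Hx Hy E. apply filter_In in Hx as [_ Hx]. apply filter_In in Hy as [_ Hy].
  destruct x as [|[|] x']; destruct y as [|[|] y']; simpl in *; try discriminate; subst; auto. Qed.

Lemma pajor L : forall V, NoDup V -> (forall v, In v V -> length v = L) -> INR (length V) <= cnt L V.
Proof.
  induction L as [|L IH]; intros V HV Hl.
  - unfold cnt; simpl allmasks. rewrite sumR_cons, sumR_nil.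
    destruct V as [|v V'].
    + simpl. pose proof (ind_nonneg (shat [] [])); lra.
    + assert (v = []) by (destruct v; auto; specialize (Hl _ (or_introl eq_refl)); simpl in Hl; lia). subst.
      destruct V' as [|w V''].
      * simpl. unfold ind. destruct (excluded_middle_informative _) as [|n]; [lra|].
        exfalso; apply n. intros b Hb. exists []; split; [left; auto|]. destruct b; simpl in *; auto; lia.
      * assert (w = []) by (destruct w; auto; specialize (Hl _ (or_intror (or_introl eq_refl))); simpl in Hl; lia). subst.
        inversion HV; subst. exfalso; apply H1; left; auto.
  - set (V0 := map (@tl bool) (filter isF V)). set (V1 := map (@tl bool) (filter isT V)).
    assert (Hlen : length V = (length V0 + length V1)%nat).
    { unfold V0, V1; rewrite !length_map. apply split_len. intros v Hv E; subst. specialize (Hl _ Hv); simpl in Hl; lia. }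
    assert (H0 : INR (length V0) <= cnt L V0).
    { apply IH. apply nodup_tlF; auto. intros w Hw. apply inF in Hw. specialize (Hl _ Hw). simpl in Hl; lia. }
    assert (H1 : INR (length V1) <= cnt L V1).
    { apply IH. apply nodup_tlT; auto. intros w Hw. apply inT in Hw. specialize (Hl _ Hw). simpl in Hl; lia. }
    rewrite Hlen, plus_INR.
    assert (cnt L V0 + cnt L V1 <= cnt (S L) V); [|lra].
    unfold cnt. simpl allmasks. rewrite sumR_app, !sumR_map. rewrite <- sumR_plus.
    transitivity (sumR (allmasks L) (fun K => ind (shat V0 K \/ shat V1 K) + ind (shat V0 K /\ shat V1 K))).
    { right. apply sumR_ext; intros. rewrite ind_or_and; auto. }
    rewrite <- sumR_plus. apply sumR_le. intros K _. apply Rplus_le_compat.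
    + apply ind_mono. intros [S0|S1] b Hb; destruct b as [|b0 b']; simpl in Hb; try lia; injection Hb; intros Hb'.
      * destruct (S0 b' Hb') as [v [Hv Hs]]. apply inF in Hv. exists (false :: v); split; auto.
      * destruct (S1 b' Hb') as [v [Hv Hs]]. apply inT in Hv. exists (true :: v); split; auto.
    + apply ind_mono. intros [S0 S1] b Hb; destruct b as [|b0 b']; simpl in Hb; try lia; injection Hb; intros Hb'.
      destruct b0.
      * destruct (S1 b' Hb') as [v [Hv Hs]]. apply inT in Hv. exists (true :: v); split; auto. simpl; rewrite Hs; auto.
      * destruct (S0 b' Hb') as [v [Hv Hs]]. apply inF in Hv. exists (false :: v); split; auto. simpl; rewrite Hs; auto.
Qed.

Lemma sel_map {A B} (f : A -> B) K l : sel K (map f l) = map f (sel K l).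
Proof. revert l; induction K as [|[|] K IH]; intros l; destruct l as [|x l]; simpl; auto. rewrite IH; auto. Qed.

Lemma sel_len {A} K (l : list A) : length K = length l -> length (sel K l) = wt K.
Proof. revert l; induction K as [|[|] K IH]; intros l E; destruct l as [|x l]; simpl in *; try lia; try rewrite IH; auto. Qed.

Lemma sel_surj (K c : list bool) : length c = wt K -> exists b : list bool, length b = length K /\ sel K b = c.
Proof. revert c; induction K as [|[|] K IH]; intros c Hc; simpl in *.
  - exists []; destruct c; simpl in *; auto; lia.
  - destruct c as [|c0 c']; simpl in Hc; [lia|]. destruct (IH c') as [b [Hb1 Hb2]]; [lia|].
    exists (c0 :: b); simpl; rewrite Hb2; auto.
  - destruct (IH c Hc) as [b [Hb1 Hb2]]. exists (false :: b); simpl; auto. Qed.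

Lemma nodup_of_patterns {X} (P : list X) : (forall c, length c = length P -> exists g : X -> bool, map g P = c) -> NoDup P.
Proof. induction P as [|x P IH]; intros Hp; constructor.
  - intros Hx. destruct (Hp (true :: map (fun _ => false) P)) as [g Hg]. simpl; rewrite length_map; auto.
    simpl in Hg. injection Hg; intros E1 E2. assert (g x = false).
    { rewrite (map_eq_in g (fun _ => false) P E1 x Hx); auto. } congruence.
  - apply IH. intros c Hc. destruct (Hp (false :: c)) as [g Hg]; simpl; auto. exists g. simpl in Hg. injection Hg; auto. Qed.

Lemma pow_le_1 x k : 0 <= x <= 1 -> x ^ k <= 1.
Proof. intros. induction k; simpl; [lra|]. replace 1 with (1 * 1) by ring. apply Rmult_le_compat; try lra.
  apply pow_le; lra. Qed.

Lemma sum_pow_wt x L : sumR (allmasks L) (fun K => x ^ wt K) = (1 + x) ^ L.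
Proof. induction L; simpl allmasks. rewrite sumR_cons, sumR_nil; simpl; lra.
  rewrite sumR_app, !sumR_map. simpl wt. simpl Nat.add.
  rewrite (sumR_ext _ (fun K => x ^ S (wt K)) (fun K => x * x ^ wt K)) by (intros; reflexivity).
  rewrite sumR_scal, IHL. simpl; ring. Qed.

Lemma exp_pow_nat a k : exp a ^ k = exp (INR k * a).
Proof. induction k. simpl; rewrite Rmult_0_l, exp_0; auto. rewrite S_INR. simpl pow. rewrite IHk, <- exp_plus. f_equal; ring. Qed.

Section Sauer.
Variable X : Type.
Variable H : (X -> bool) -> Prop.
Variable d : nat.
Hypothesis HVC : VCdim H d.
Hypothesis Hd : (1 <= d)%nat.

Definition realized (Q : list X) (b : list bool) : bool :=
  if excluded_middle_informative (exists h, H h /\ map h Q = b) then true else false.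
Definition Vpat (Q : list X) : list (list bool) := filter (realized Q) (allmasks (length Q)).

Lemma Vpat_in Q b : In b (Vpat Q) <-> exists h, H h /\ map h Q = b.
Proof. unfold Vpat, realized. rewrite filter_In, allmasks_in.
  destruct (excluded_middle_informative _) as [E|E]; split; try tauto.
  - intros; split; auto. destruct E as [h [_ <-]]; apply length_map.
  - intros [_ F]; discriminate. Qed.

Lemma shat_wt Q K : length K = length Q -> shat (Vpat Q) K -> (wt K <= d)%nat.
Proof. intros HK Hs. destruct HVC as [_ Hmax].
  rewrite <- (sel_len K Q HK). apply Hmax. split.
  - apply nodup_of_patterns. intros c Hc. rewrite (sel_len K Q HK) in Hc.
    destruct (sel_surj K c Hc) as [bl [Hb1 Hb2]]. destruct (Hs bl Hb1) as [v [Hv Hsv]].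
    apply Vpat_in in Hv as [h [Hh <-]]. exists h. rewrite <- sel_map, Hsv; auto.
  - intros b. destruct (Hs (map b Q)) as [v [Hv Hsv]]. rewrite length_map; auto.
    apply Vpat_in in Hv as [h [Hh <-]]. exists h; split; auto. rewrite !sel_map in Hsv.
    intros x Hx. apply (map_eq_in _ _ _ Hsv); auto. Qed.

Lemma sauer_count (Q : list X) (M : nat) : (length Q <= M)%nat -> (d <= M)%nat ->
  INR (length (Vpat Q)) <= (exp 1 * INR M / INR d) ^ d.
Proof.
  intros HQ HdM.
  assert (Hdp : 0 < INR d) by (apply lt_0_INR; lia).
  assert (HMp : 0 < INR M) by (apply lt_0_INR; lia).
  set (x := INR d / INR M).
  assert (Hx : 0 < x <= 1).
  { unfold x; split. apply Rdiv_lt_0_compat; auto. apply (Rmult_le_reg_r (INR M)); auto. unfold Rdiv; rewrite Rmult_assoc, Rinv_l, Rmult_1_r, Rmult_1_l by lra. apply le_INR; auto. }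
  eapply Rle_trans. apply (pajor (length Q)). apply NoDup_filter, allmasks_nodup.
  intros v Hv. unfold Vpat in Hv. apply filter_In in Hv as [Hv _]. apply allmasks_in in Hv; auto.
  unfold cnt.
  transitivity (sumR (allmasks (length Q)) (fun K => x ^ wt K / x ^ d)).
  { apply sumR_le. intros K HK. apply allmasks_in in HK. unfold ind.
    destruct (excluded_middle_informative _) as [Hs|]; [|unfold Rdiv; apply Rmult_le_pos; [apply pow_le; lra| left; apply Rinv_0_lt_compat, pow_lt; lra]].
    apply shat_wt in Hs; auto. assert (Hxd : 0 < x ^ d) by (apply pow_lt; lra).
    apply (Rmult_le_reg_r (x ^ d)); auto. unfold Rdiv; rewrite Rmult_assoc, Rinv_l, Rmult_1_l, Rmult_1_r by lra.
    replace d with (wt K + (d - wt K))%nat at 1 by lia. rewrite pow_add.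
    pose proof (pow_le_1 x (d - wt K) (conj (Rlt_le _ _ (proj1 Hx)) (proj2 Hx))).
    assert (0 <= x ^ wt K) by (apply pow_le; lra). nra. }
  unfold Rdiv. rewrite (sumR_ext _ _ (fun K => / x ^ d * x ^ wt K)) by (intros; ring).
  rewrite sumR_scal, sum_pow_wt.
  transitivity (/ x ^ d * exp (INR d)).
  { apply Rmult_le_compat_l. left; apply Rinv_0_lt_compat, pow_lt; lra.
    transitivity ((1 + x) ^ M). apply Rle_pow; auto; lra.
    transitivity (exp x ^ M). apply pow_incr; split; [lra|]. apply exp_ineq1_le.
    rewrite exp_pow_nat. apply exp_le'. unfold x. right; field; lra. }
  replace (exp (INR d)) with (exp 1 ^ d) by (rewrite exp_pow_nat; f_equal; ring).
  rewrite <- pow_inv, <- Rpow_mult_distr. apply pow_incr. split.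
  apply Rmult_le_pos. left; apply Rinv_0_lt_compat; lra. left; apply exp_pos.
  unfold x. right. field. lra.
Qed.

Lemma sauer (Q : list X) (M : nat) : (length Q <= M)%nat -> (d <= M)%nat ->
  exists Vh : list (X -> bool), (forall h', In h' Vh -> H h') /\
    (forall h, H h -> exists h', In h' Vh /\ map h Q = map h' Q) /\
    INR (length Vh) <= (exp 1 * INR M / INR d) ^ d.
Proof.
  intros HQ HdM.
  set (rep := fun b => epsilon (inhabits (fun _ : X => true)) (fun h => H h /\ map h Q = b)).
  assert (Hrep : forall b, In b (Vpat Q) -> H (rep b) /\ map (rep b) Q = b).
  { intros b Hb. apply Vpat_in in Hb. unfold rep. apply epsilon_spec; auto. }
  exists (map rep (Vpat Q)). split; [|split].
  - intros h' Hh'. apply in_map_iff in Hh' as [b [<- Hb]]. apply Hrep; auto.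
  - intros h Hh. assert (Hb : In (map h Q) (Vpat Q)) by (apply Vpat_in; eauto).
    exists (rep (map h Q)). split. apply in_map; auto. symmetry; apply Hrep; auto.
  - rewrite length_map. apply sauer_count; auto.
Qed.
End Sauer.

Lemma prodsp_in {A} I (L : list A) d y : In y (prodsp I L d) -> forall i, In i I -> In (y i) L.
Proof. revert y; induction I as [|i0 I IH]; intros y Hy i Hi; [contradiction|].
  simpl in Hy. apply in_flat_map in Hy as [s [Hs Hy]]. apply in_map_iff in Hy as [g [<- Hg]].
  unfold upd. destruct (Nat.eqb i i0) eqn:E; auto. destruct Hi as [->|Hi]. rewrite Nat.eqb_refl in E; discriminate.
  apply IH; auto. Qed.

Lemma sumR_pos_exists {A} (l : list A) F : 0 < sumR l F -> exists x, In x l /\ 0 < F x.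
Proof. induction l; intros Hs. rewrite sumR_nil in Hs; lra. rewrite sumR_cons in Hs.
  destruct (Rlt_dec 0 (F a)). exists a; split; auto; left; auto.
  destruct IHl as [x [Hx Hf]]. lra. exists x; split; auto; right; auto. Qed.

Lemma sumR_nth (g : list nat) W : sumR g W = sumR (seq 0 (length g)) (fun q => W (nth0 g q)).
Proof. induction g as [|x g IH]. reflexivity. simpl length. rewrite sumR_seq_S, sumR_cons, IH. unfold nth0; simpl. auto. Qed.

Lemma seq_add_map a b : seq a b = map (fun q => (a + q)%nat) (seq 0 b).
Proof. revert a; induction b; intros a; simpl; auto. f_equal; [lia|]. rewrite IHb, <- seq_shift, map_map.
  apply map_ext; intros; lia. Qed.

Lemma sumR_seq_add a b F : sumR (seq 0 (a + b)) F = sumR (seq 0 a) F + sumR (seq 0 b) (fun q => F (a + q)%nat).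
Proof. rewrite seq_app, sumR_app. f_equal. simpl. rewrite seq_add_map, sumR_map; auto. Qed.

Definition rot (n m r k l j : nat) : nat :=
  if j <? m then (if j + k <? m then j + k else j + k - m)%nat else (if j + l <? n then j + l else j + l - r)%nat.
Definition rotl n m r k l : list nat := map (rot n m r k l) (seq 0 n).

Lemma rotl_perm n m r k l : n = (m + r)%nat -> (k < m)%nat -> (l < r)%nat -> In (rotl n m r k l) (permsn n).
Proof. intros E Hk Hl. apply map_seq_perm.
  - intros j Hj. unfold rot. destruct (Nat.ltb_spec j m); destruct (Nat.ltb_spec (j+k) m); destruct (Nat.ltb_spec (j+l) n); lia.
  - intros i j Hi Hj. unfold rot. destruct (Nat.ltb_spec j m); destruct (Nat.ltb_spec (j+k) m); destruct (Nat.ltb_spec (j+l) n);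
    destruct (Nat.ltb_spec i m); destruct (Nat.ltb_spec (i+k) m); destruct (Nat.ltb_spec (i+l) n); lia. Qed.

Lemma avg_rot_seq m j (F : nat -> R) : (j < m)%nat ->
  avg (seq 0 m) (fun k => F (if j + k <? m then j + k else j + k - m)%nat) = / INR m * sumR (seq 0 m) F.
Proof. intros Hj. unfold avg. rewrite length_seq. rewrite (sumR_seq_bij m (fun k => if j + k <? m then j + k else j + k - m)%nat F). unfold Rdiv; ring.
  - intros k Hk. destruct (Nat.ltb_spec (j+k) m); lia.
  - intros a b Ha Hb. destruct (Nat.ltb_spec (j+a) m); destruct (Nat.ltb_spec (j+b) m); lia. Qed.

Lemma rot_identity (n m r p : nat) (g : list nat) (W : nat -> R) :
  n = (m + r)%nat -> (0 < p)%nat -> (p <= m)%nat -> (p <= r)%nat ->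
  avg (seq 0 m) (fun k => avg (seq 0 r) (fun l => / INR p * sumR (seq 0 p)
      (fun j => W (nth0 (comp g (rotl n m r k l)) (m + j)) - W (nth0 (comp g (rotl n m r k l)) j))))
  = / INR r * sumR (seq 0 r) (fun q => W (nth0 g (m + q))) - / INR m * sumR (seq 0 m) (fun q => W (nth0 g q)).
Proof.
  intros E Hp Hpm Hpr.
  set (Cb := / INR r * sumR (seq 0 r) (fun q => W (nth0 g (m + q)))).
  set (Ab := / INR m * sumR (seq 0 m) (fun q => W (nth0 g q))).
  transitivity (avg (seq 0 m) (fun k => avg (seq 0 r) (fun l => / INR p * sumR (seq 0 p)
      (fun j => W (nth0 g (m + (if j + l <? r then j + l else j + l - r)%nat)) - W (nth0 g (if j + k <? m then j + k else j + k - m)%nat))))).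
  { apply avg_ext; intros k Hk; apply avg_ext; intros l Hl. apply in_seq in Hk; apply in_seq in Hl. f_equal.
    apply sumR_ext; intros j Hj. apply in_seq in Hj. unfold rotl. rewrite !nth_comp_map by lia. unfold rot.
    f_equal; f_equal; f_equal.
    - destruct (Nat.ltb_spec (m+j) m); [lia|]. destruct (Nat.ltb_spec (m + j + l) n); destruct (Nat.ltb_spec (j + l) r); lia.
    - destruct (Nat.ltb_spec j m); lia. }
  rewrite (avg_ext _ _ (fun k => / INR p * sumR (seq 0 p) (fun j => avg (seq 0 r) (fun l => W (nth0 g (m + (if j + l <? r then j + l else j + l - r)%nat))) - W (nth0 g (if j + k <? m then j + k else j + k - m)%nat)))).
  2:{ intros k Hk. rewrite avg_scal, avg_sumR. f_equal. apply sumR_ext; intros j Hj.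
      unfold Rminus. rewrite avg_plus, avg_const; auto. intro Hc; apply (f_equal (@length nat)) in Hc. rewrite length_seq in Hc; simpl in Hc; lia. }
  rewrite avg_scal, avg_sumR.
  rewrite (sumR_ext _ _ (fun _ => Cb - Ab)).
  2:{ intros j Hj. apply in_seq in Hj. unfold Rminus. rewrite avg_plus, avg_const.
      2:{ intro Hc; apply (f_equal (@length nat)) in Hc. rewrite length_seq in Hc; simpl in Hc; lia. }
      rewrite (avg_ext _ (fun k => - W (nth0 g (if j + k <? m then j + k else j + k - m)%nat)) (fun k => -1 * W (nth0 g (if j + k <? m then j + k else j + k - m)%nat))) by (intros; ring).
      rewrite avg_scal. rewrite (avg_rot_seq m j (fun q => W (nth0 g q))) by lia.
      rewrite (avg_rot_seq r j (fun q => W (nth0 g (m + q)%nat))) by lia. unfold Cb, Ab; ring. }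
  rewrite sumR_const, length_seq. field. apply not_0_INR; lia.
Qed.

Definition swp (m p : nat) (b : list bool) (j : nat) : nat :=
  if j <? p then (if nth j b false then m + j else j)%nat
  else if (m <=? j) && (j <? m + p) then (if nth (j - m) b false then j - m else j)%nat else j.
Definition swl n m p b : list nat := map (swp m p b) (seq 0 n).

Lemma swp_invol m p b j : (p <= m)%nat -> swp m p b (swp m p b j) = j.
Proof. intros Hpm. unfold swp.
  destruct (Nat.ltb_spec j p).
  - destruct (nth j b false) eqn:E.
    + destruct (Nat.ltb_spec (m + j) p); [lia|]. destruct (Nat.leb_spec m (m + j)); [|lia].
      destruct (Nat.ltb_spec (m + j) (m + p)); [|lia]. simpl. replace (m + j - m)%nat with j by lia. rewrite E. lia.
    + destruct (Nat.ltb_spec j p); [|lia]. rewrite E; auto.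
  - destruct (Nat.leb_spec m j); destruct (Nat.ltb_spec j (m + p)); simpl.
    + destruct (nth (j - m) b false) eqn:E.
      * destruct (Nat.ltb_spec (j - m) p); [|lia]. rewrite E. lia.
      * destruct (Nat.ltb_spec j p); [lia|]. destruct (Nat.leb_spec m j); [|lia]. destruct (Nat.ltb_spec j (m+p)); [|lia]. simpl. rewrite E; auto.
    + destruct (Nat.ltb_spec j p); [lia|]. destruct (Nat.leb_spec m j); [|lia]. destruct (Nat.ltb_spec j (m+p)); [lia|]. auto.
    + destruct (Nat.ltb_spec j p); [lia|]. destruct (Nat.leb_spec m j); [lia|]. auto.
    + destruct (Nat.ltb_spec j p); [lia|]. destruct (Nat.leb_spec m j); [lia|]. auto.
Qed.

Lemma swp_lt n m p b j : (p <= m)%nat -> (m + p <= n)%nat -> (j < n)%nat -> (swp m p b j < n)%nat.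
Proof. intros. unfold swp. destruct (Nat.ltb_spec j p). destruct (nth j b false); lia.
  destruct (Nat.leb_spec m j); destruct (Nat.ltb_spec j (m + p)); simpl; try lia. destruct (nth (j - m) b false); lia. Qed.

Lemma swl_perm n m p b : (p <= m)%nat -> (m + p <= n)%nat -> In (swl n m p b) (permsn n).
Proof. intros. apply map_seq_perm. intros; apply swp_lt; auto.
  intros i j Hi Hj E. rewrite <- (swp_invol m p b i), <- (swp_invol m p b j), E; auto. Qed.

Lemma nth_swap1 n m p b g j : (p <= m)%nat -> (m + p <= n)%nat -> (j < p)%nat ->
  nth0 (comp g (swl n m p b)) (m + j) = if nth j b false then nth0 g j else nth0 g (m + j).
Proof. intros. unfold swl. rewrite nth_comp_map by lia. unfold swp.
  destruct (Nat.ltb_spec (m + j) p); [lia|]. destruct (Nat.leb_spec m (m + j)); [|lia].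
  destruct (Nat.ltb_spec (m + j) (m + p)); [|lia]. simpl. replace (m + j - m)%nat with j by lia.
  destruct (nth j b false); auto. Qed.

Lemma nth_swap2 n m p b g j : (p <= m)%nat -> (m + p <= n)%nat -> (j < p)%nat ->
  nth0 (comp g (swl n m p b)) j = if nth j b false then nth0 g (m + j) else nth0 g j.
Proof. intros. unfold swl. rewrite nth_comp_map by lia. unfold swp.
  destruct (Nat.ltb_spec j p); [|lia]. destruct (nth j b false); auto. Qed.

Lemma final_arith (r n p m : nat) (Sg Bc : R) : (0 < r)%nat -> (0 < p)%nat -> (0 < m)%nat -> (r <= n)%nat ->
  (r * r * m <= n * n * p)%nat -> 0 < Sg -> 0 < Bc ->
  INR r / INR n * (/ INR p * (sqrt (INR p * Sg / 4) * sqrt (2 * Bc) + sqrt (INR p * Sg / 4) * sqrt (2 * Bc)))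
  <= sqrt Sg * sqrt (2 * Bc / INR m).
Proof.
  intros Hr Hp Hm Hrn Hk HS HB.
  assert (Pr : 0 < INR r) by (apply lt_0_INR; lia).
  assert (Pp : 0 < INR p) by (apply lt_0_INR; lia).
  assert (Pm : 0 < INR m) by (apply lt_0_INR; lia).
  assert (Pn : 0 < INR n) by (apply lt_0_INR; lia).
  assert (Hk' : INR r * INR r * INR m <= INR n * INR n * INR p) by (rewrite <- !mult_INR; apply le_INR; auto).
  set (sp := sqrt (INR p)). set (sm := sqrt (INR m)).
  assert (Esp : sp * sp = INR p) by (apply sqrt_sqrt; lra).
  assert (Esm : sm * sm = INR m) by (apply sqrt_sqrt; lra).
  assert (Psp : 0 < sp) by (apply sqrt_lt_R0; lra).
  assert (Psm : 0 < sm) by (apply sqrt_lt_R0; lra).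
  assert (E1 : sqrt (INR p * Sg / 4) = sp * sqrt Sg / 2).
  { unfold Rdiv. rewrite sqrt_mult_alt by (apply Rmult_le_pos; lra). rewrite sqrt_mult_alt by lra.
    rewrite sqrt_inv. replace 4 with (2 * 2) by ring. rewrite sqrt_square by lra. fold sp. field. }
  assert (E2 : sqrt (2 * Bc / INR m) = sqrt (2 * Bc) / sm).
  { rewrite sqrt_div by lra. auto. }
  rewrite E1, E2.
  set (s1 := sqrt Sg). set (s2 := sqrt (2 * Bc)).
  assert (P1 : 0 < s1) by (apply sqrt_lt_R0; lra).
  assert (P2 : 0 < s2) by (apply sqrt_lt_R0; lra).
  assert (Hkey : INR r * sm <= INR n * sp).
  { assert (0 <= INR r * sm) by nra. assert (0 <= INR n * sp) by nra.
    apply Rsqr_incr_0_var; unfold Rsqr; [|lra].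
    replace (INR r * sm * (INR r * sm)) with (INR r * INR r * (sm * sm)) by ring.
    replace (INR n * sp * (INR n * sp)) with (INR n * INR n * (sp * sp)) by ring. rewrite Esm, Esp. lra. }
  rewrite <- Esp at 1.
  replace (INR r / INR n * (/ (sp * sp) * (sp * s1 / 2 * s2 + sp * s1 / 2 * s2))) with ((INR r * sm) * (s1 * s2) / (INR n * sp * sm)) by (field; lra).
  replace (s1 * (s2 / sm)) with ((INR n * sp) * (s1 * s2) / (INR n * sp * sm)) by (field; lra).
  unfold Rdiv. apply Rmult_le_compat_r. left; apply Rinv_0_lt_compat; nra.
  apply Rmult_le_compat_r; nra.
Qed.

Section PerT.
Variable X : Type.
Variable S : nat -> nat -> X.
Variable f : nat -> X -> bool.
Variable H : (X -> bool) -> Prop.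
Variables n m d : nat.
Variable I : list nat.
Variable a : nat -> R.
Hypothesis HVC : VCdim H d.
Hypothesis Hd : (1 <= d)%nat.
Hypothesis Hdm : (d <= m)%nat.
Hypothesis Hmn : (m <= n)%nat.
Hypothesis HI : NoDup I.
Hypothesis Ha01 : forall i, In i I -> 0 <= a i <= 1.
Hypothesis Hsum : sumR I a = 1.

Lemma Hne : exists h, H h.
Proof. destruct HVC as [[P [_ [_ Hsh]]] _]. destruct (Hsh (fun _ => true)) as [h [Hh _]]; eauto. Qed.

Definition W (h : X -> bool) (i q : nat) : R := loss01 (h (S i q)) (f i (S i q)).

Lemma W01 h i q : W h i q = 0 \/ W h i q = 1.
Proof. unfold W, loss01. destruct (Bool.eqb _ _); auto. Qed.

Lemma bnd_W i q : bndH X H (fun h => W h i q).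
Proof. apply bndH_loss. Qed.

Lemma I_ne : I <> [].
Proof. intro E. rewrite E, sumR_nil in Hsum. lra. Qed.

Lemma I_len : (1 <= length I)%nat.
Proof. pose proof I_ne. destruct (length I) eqn:E; [|lia]. apply length_zero_iff_nil in E; contradiction. Qed.

Lemma sumsq_pos : 0 < sumR I (fun i => a i ^ 2).
Proof. destruct (sumR_pos_exists I a) as [i [Hi Hai]]. lra.
  eapply Rlt_le_trans; [|apply (sumR_ge_term I (fun i => a i ^ 2) i Hi)]. apply pow_lt; auto.
  intros; apply pow2_ge_0. Qed.

Section WithY.
Variable p : nat.
Hypothesis Hp : (0 < p)%nat.
Hypothesis Hpm : (p <= m)%nat.

Definition Bc : R := INR d * ln (exp 1 * INR (length I * m) / INR d).

Lemma Bc_pos : 0 < Bc.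
Proof. unfold Bc. apply Rmult_lt_0_compat. apply lt_0_INR; lia.
  pose proof I_len as HI1.
  assert (Hd0 : 0 < INR d) by (apply lt_0_INR; lia).
  assert (1 <= INR (length I * m) / INR d).
  { apply (Rmult_le_reg_r (INR d)); auto. unfold Rdiv; rewrite Rmult_assoc, Rinv_l, Rmult_1_r, Rmult_1_l by lra.
    apply le_INR. nia. }
  rewrite <- ln_1. apply ln_increasing. lra.
  unfold Rdiv. rewrite Rmult_assoc. pose proof (exp_pos 1). pose proof (exp_ineq1 1 ltac:(lra)).
  assert (exp 1 * 1 <= exp 1 * (INR (length I * m) * / INR d)) by (apply Rmult_le_compat_l; lra). lra. Qed.

Lemma massart_apply (pos : nat -> nat -> nat) (s : R) : s * s = 1 ->
  avg (prodsp I (allmasks p) []) (fun sigma => supH X H (rsum X I p (fun h i j => a i * (s * (W h i (pos i j) - / 2))) sigma))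
  <= sqrt (INR p * sumR I (fun i => a i ^ 2) / 4) * sqrt (2 * Bc).
Proof.
  intros Hs.
  set (Q := flat_map (fun i => map (fun j => S i (pos i j)) (seq 0 p)) I).
  assert (HQ : (length Q <= length I * m)%nat).
  { unfold Q. rewrite length_flat_map. rewrite (map_ext _ (fun _ => p)) by (intros; rewrite length_map, length_seq; auto).
    rewrite list_sum_const. nia. }
  assert (HdM : (d <= length I * m)%nat).
  { pose proof I_len. nia. }
  destruct (sauer X H d HVC Hd Q (length I * m) HQ HdM) as [Vh [HV1 [HV2 HV3]]].
  apply (massart X H Hne I HI p _ Vh); auto.
  - intros h Hh. destruct (HV2 h Hh) as [h' [Hh' Hm]]. exists h'; split; auto.
    intros i j Hi Hj. unfold W. rewrite (map_eq_in _ _ _ Hm (S i (pos i j))); auto.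
    unfold Q. apply in_flat_map. exists i; split; auto. apply in_map_iff. exists j; split; auto. apply in_seq; lia.
  - intros h Hh. right.
    rewrite (sumR_ext _ _ (fun i => INR p * (a i ^ 2 / 4))).
    + rewrite sumR_scal. rewrite (sumR_ext _ _ (fun i => / 4 * a i ^ 2)) by (intros; field).
      rewrite sumR_scal. field.
    + intros i Hi. rewrite (sumR_ext _ _ (fun _ => a i ^ 2 / 4)). rewrite sumR_const, length_seq; auto.
      intros j _. destruct (W01 h i (pos i j)) as [E|E]; rewrite E; field_simplify; nra.
  - apply Rmult_lt_0_compat; [|lra]. apply Rmult_lt_0_compat. apply lt_0_INR; lia. apply sumsq_pos.
  - apply Bc_pos.
  - assert (0 < INR (length Vh)).
    { destruct Hne as [h Hh]. destruct (HV2 h Hh) as [h' [Hh' _]]. apply INR_len_pos. intro E; rewrite E in Hh'; auto. }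
    eapply Rle_trans. apply ln_le'; eauto. unfold Bc. rewrite ln_pow. right; auto.
    apply Rdiv_lt_0_compat; [|apply lt_0_INR; lia]. apply Rmult_lt_0_compat. apply exp_pos.
    apply lt_0_INR. pose proof I_len. nia.
Qed.

Definition Pf (z : nat -> list nat) (h : X -> bool) : R :=
  sumR I (fun i => a i * (/ INR p * sumR (seq 0 p) (fun j => W h i (nth0 (z i) (m + j)) - W h i (nth0 (z i) j)))).

Lemma bnd_Pf z : bndH X H (Pf z).
Proof. unfold Pf. apply bndH_sumR; intros i _. apply bndH_scal, bndH_scal, bndH_sumR; intros j _.
  apply bndH_minus; apply bnd_W. Qed.

Definition uC (y : nat -> list nat) : (X -> bool) -> nat -> nat -> R :=
  fun h i j => a i * (1 * (W h i (nth0 (y i) (m + j)) - / 2)).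
Definition uA (y : nat -> list nat) : (X -> bool) -> nat -> nat -> R :=
  fun h i j => a i * (-1 * (W h i (nth0 (y i) j) - / 2)).

Lemma bnd_rsum y (u : (nat -> list nat) -> (X -> bool) -> nat -> nat -> R) sigma :
  (forall i j, bndH X H (fun h => u y h i j)) -> bndH X H (rsum X I p (u y) sigma).
Proof. intros Hu. unfold rsum. apply bndH_sumR; intros i _. apply bndH_sumR; intros j _.
  apply bndH_scal. apply Hu. Qed.

Lemma bnd_uC y i j : bndH X H (fun h => uC y h i j).
Proof. unfold uC. apply bndH_scal, bndH_scal, bndH_minus. apply bnd_W. apply bndH_const. Qed.
Lemma bnd_uA y i j : bndH X H (fun h => uA y h i j).
Proof. unfold uA. apply bndH_scal, bndH_scal, bndH_minus. apply bnd_W. apply bndH_const. Qed.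

Lemma swap_identity (y : nat -> list nat) sigma h : (m + p <= n)%nat ->
  Pf (fun j => comp (y j) (swl n m p (sigma j))) h = / INR p * (rsum X I p (uC y) sigma h + rsum X I p (uA y) sigma h).
Proof.
  intros Hmp. unfold Pf, rsum. rewrite <- sumR_plus, <- sumR_scal. apply sumR_ext; intros i Hi.
  rewrite <- sumR_plus, <- !sumR_scal. apply sumR_ext; intros j Hj. apply in_seq in Hj.
  rewrite nth_swap1, nth_swap2 by lia. unfold uC, uA, sg.
  destruct (nth j (sigma i) false); ring.
Qed.
End WithY.

Definition Dfun (x : nat -> list nat) (h : X -> bool) : R :=
  er_tilde_w S f n I a h - er_hat_w S f m x I a h.

Lemma bnd_D x : bndH X H (Dfun x).
Proof. unfold Dfun, er_tilde_w, er_hat_w, er_tilde, er_hat. apply bndH_minus; apply bndH_sumR; intros i _;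
  apply bndH_scal, bndH_scal, bndH_sumR; intros; apply bndH_loss. Qed.

Lemma D_expand (x : nat -> list nat) h : Dfun x h =
  sumR I (fun i => a i * (/ INR n * sumR (seq 0 n) (fun q => W h i q) - / INR m * sumR (x i) (fun q => W h i q))).
Proof. unfold Dfun, er_tilde_w, er_hat_w, er_tilde, er_hat. rewrite <- sumR_minus. apply sumR_ext; intros. unfold W; ring. Qed.

Lemma bndH_avg {A0} (L : list A0) (g : A0 -> (X -> bool) -> R) : (forall x, In x L -> bndH X H (g x)) ->
  bndH X H (fun h => avg L (fun x => g x h)).
Proof. intros Hg. unfold avg. destruct (bndH_sumR X H L g Hg) as [M HM].
  exists (M * Rabs (/ INR (length L))). intros h Hh. unfold Rdiv. rewrite Rabs_mult.
  apply Rmult_le_compat_r; auto. apply Rabs_pos. Qed.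

Lemma avg2_sum (L1 L2 : list nat) (Xf : nat -> nat -> nat -> R) :
  avg L1 (fun k => avg L2 (fun l => sumR I (fun i => a i * Xf i k l))) =
  sumR I (fun i => a i * avg L1 (fun k => avg L2 (fun l => Xf i k l))).
Proof. rewrite (avg_ext L1 _ (fun k => sumR I (fun i => a i * avg L2 (fun l => Xf i k l)))).
  - rewrite avg_sumR. apply sumR_ext; intros. apply avg_scal.
  - intros k _. rewrite avg_sumR. apply sumR_ext; intros. apply avg_scal. Qed.

Lemma per_t : avg (choices I n m) (fun x => supH X H (Dfun x)) <=
  sqrt (sumR I (fun i => a i ^ 2)) * sqrt (2 * INR d * ln (exp 1 * INR (length I) * INR m / INR d) / INR m).
Proof.
  assert (Hne0 := Hne).
  rewrite choices_prodsp.
  rewrite (prod_transfer (@Permutation nat) (@Permutation_refl nat) (msubsets n m) (permsn n) [] [] (fun _ g => firstn m g) I (ms_ne n m Hmn) (permsn_ne n)).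
  2:{ intros i _ G HG. apply S1_single; auto. }
  2:{ intros x y Hxy. apply supH_ext; try apply bnd_D; auto. intros h _. rewrite !D_expand.
      apply sumR_ext; intros i Hi. f_equal. f_equal. f_equal. apply sumR_perm; auto. }
  set (Y := prodsp I (permsn n) []).
  assert (HY : forall y, In y Y -> forall i, In i I -> In (y i) (permsn n)) by (intros; eapply prodsp_in; eauto).
  assert (HYne : Y <> []) by (apply prodsp_ne, permsn_ne).
  assert (HSg := sumsq_pos).
  assert (Hm0 : (0 < m)%nat) by lia.
  destruct (Nat.eq_dec m n) as [Emn|Hlt].
  - transitivity (avg Y (fun _ => 0)).
    + apply avg_le; intros y Hy. apply supH_le; auto. apply bnd_D. intros h _. rewrite D_expand.
      right. rewrite (sumR_ext _ _ (fun _ => 0)). rewrite sumR_const; ring.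
      intros i Hi. specialize (HY y Hy i Hi). rewrite firstn_all2.
      2:{ apply permsn_in in HY as [HY _]. lia. }
      apply perm_seq_iff in HY. rewrite (sumR_perm _ _ _ HY). subst; ring.
    + rewrite avg_const by auto. apply Rmult_le_pos; apply sqrt_pos.
  - set (r := (n - m)%nat). set (p := Nat.min m r).
    assert (Hr : (0 < r)%nat) by (unfold r; lia).
    assert (Hp : (0 < p)%nat) by (unfold p; lia).
    assert (Hpm : (p <= m)%nat) by (unfold p; lia).
    assert (Hpr : (p <= r)%nat) by (unfold p; lia).
    assert (Enr : n = (m + r)%nat) by (unfold r; lia).
    assert (Hseqm : seq 0 m <> []) by (intro E; apply (f_equal (@length nat)) in E; rewrite length_seq in E; simpl in E; lia).
    assert (Hseqr : seq 0 r <> []) by (intro E; apply (f_equal (@length nat)) in E; rewrite length_seq in E; simpl in E; lia).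
    set (c := INR r / INR n).
    assert (Hc : 0 <= c) by (unfold c; apply Rmult_le_pos; [apply pos_INR| left; apply Rinv_0_lt_compat, lt_0_INR; lia]).
    assert (Hstep : forall y, In y Y -> supH X H (Dfun (fun j => firstn m (y j))) <=
       c * avg (seq 0 m) (fun k => avg (seq 0 r) (fun l => supH X H (Pf p (fun j => comp (y j) (rotl n m r k l)))))).
    { intros y Hy.
      rewrite (supH_ext X H Hne _ (fun h => c * avg (seq 0 m) (fun k => avg (seq 0 r) (fun l => Pf p (fun j => comp (y j) (rotl n m r k l)) h)))).
      - eapply Rle_trans. apply supH_avg; auto.
        + intros k _. apply bndH_avg. intros l _. apply bnd_Pf.
        + apply Rmult_le_compat_l; auto. apply avg_le; intros k _.
          transitivity (supH X H (fun h => 1 * avg (seq 0 r) (fun l => Pf p (fun j => comp (y j) (rotl n m r k l)) h))).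
          { right. apply supH_ext; auto. apply bndH_avg; intros; apply bnd_Pf.
            apply bndH_scal, bndH_avg; intros; apply bnd_Pf. intros; ring. }
          eapply Rle_trans; [apply supH_avg; auto; try lra; intros; apply bnd_Pf | ]. apply Req_le. rewrite Rmult_1_l. reflexivity.
      - apply bnd_D.
      - apply bndH_scal, bndH_avg; intros; apply bndH_avg; intros; apply bnd_Pf.
      - intros h _. rewrite D_expand. unfold Pf. rewrite avg2_sum. rewrite <- sumR_scal.
        apply sumR_ext; intros i Hi. specialize (HY y Hy i Hi).
        rewrite (rot_identity n m r p (y i) (W h i)) by auto.
        assert (Hlen : length (y i) = n) by (apply permsn_in in HY; tauto).
        rewrite (sumR_perm (seq 0 n) (y i) _ (Permutation_sym (proj1 (perm_seq_iff n (y i)) HY))).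
        rewrite sumR_nth, Hlen, Enr, sumR_seq_add.
        rewrite (sumR_nth (firstn m (y i))), length_firstn, Nat.min_l by lia.
        rewrite (sumR_ext (seq 0 m) (fun q => W h i (nth0 (firstn m (y i)) q)) (fun q => W h i (nth0 (y i) q))).
        2:{ intros q Hq. apply in_seq in Hq. unfold nth0. rewrite nth_firstn. destruct (Nat.ltb_spec q m); auto; lia. }
        unfold c. rewrite Enr. rewrite plus_INR.
        assert (0 < INR m) by (apply lt_0_INR; lia). assert (0 < INR r) by (apply lt_0_INR; lia).
        field. lra. }
    transitivity (avg Y (fun y => c * avg (seq 0 m) (fun k => avg (seq 0 r) (fun l => supH X H (Pf p (fun j => comp (y j) (rotl n m r k l))))))).
    { apply avg_le; auto. }
    rewrite avg_scal, avg_swap.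
    rewrite (avg_ext (seq 0 m) _ (fun k => avg (seq 0 r) (fun l => avg Y (fun y => supH X H (Pf p (fun j => comp (y j) (rotl n m r k l))))))).
    2:{ intros k Hk. apply avg_swap. }
    set (Fp := fun y => supH X H (Pf p y)).
    assert (HFp : forall x y : nat -> list nat, (forall i, In i I -> x i = y i) -> Fp x = Fp y).
    { intros x y Hxy. unfold Fp. apply supH_ext; auto; try apply bnd_Pf. intros h _. unfold Pf.
      apply sumR_ext; intros i Hi. rewrite Hxy; auto. }
    rewrite (avg_ext (seq 0 m) _ (fun _ => avg Y Fp)).
    2:{ intros k Hk. rewrite (avg_ext (seq 0 r) _ (fun _ => avg Y Fp)). apply avg_const; auto.
        intros l Hl. apply in_seq in Hk; apply in_seq in Hl. unfold Y. symmetry.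
        apply (prod_transfer eq (@eq_refl _) (permsn n) (permsn n) [] [] (fun _ g => comp g (rotl n m r k l)) I (permsn_ne n) (permsn_ne n)); auto.
        intros i _ G _. symmetry. apply avg_comp. apply rotl_perm; lia. }
    rewrite avg_const by auto.
    set (SW := prodsp I (allmasks p) []).
    assert (HSW : SW <> []) by (apply prodsp_ne, allmasks_ne).
    assert (Eswap : avg Y Fp = avg Y (fun y => avg SW (fun sigma => Fp (fun j => comp (y j) (swl n m p (sigma j)))))).
    { rewrite avg_swap. rewrite <- (avg_const SW (avg Y Fp)) at 1 by auto. apply avg_ext; intros sigma _.
      apply (prod_transfer eq (@eq_refl _) (permsn n) (permsn n) [] [] (fun j g => comp g (swl n m p (sigma j))) I (permsn_ne n) (permsn_ne n)); auto.
      intros i _ G _. symmetry. apply avg_comp. apply swl_perm; lia. }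
    rewrite Eswap.
    set (Mb := sqrt (INR p * sumR I (fun i => a i ^ 2) / 4) * sqrt (2 * Bc)).
    transitivity (c * avg Y (fun _ => / INR p * (Mb + Mb))).
    { apply Rmult_le_compat_l; auto. apply avg_le; intros y Hy.
      transitivity (avg SW (fun sigma => / INR p * (supH X H (rsum X I p (uC y) sigma) + supH X H (rsum X I p (uA y) sigma)))).
      { apply avg_le; intros sigma _. unfold Fp.
        rewrite (supH_ext X H Hne _ (fun h => / INR p * (rsum X I p (uC y) sigma h + rsum X I p (uA y) sigma h))).
        - eapply Rle_trans. apply supH_scal; auto. left; apply Rinv_0_lt_compat, lt_0_INR; lia.
          apply bndH_plus; apply bnd_rsum; intros; [apply bnd_uC|apply bnd_uA].
          apply Rmult_le_compat_l. left; apply Rinv_0_lt_compat, lt_0_INR; lia.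
          apply supH_plus; auto; apply bnd_rsum; intros; [apply bnd_uC|apply bnd_uA].
        - apply bnd_Pf.
        - apply bndH_scal, bndH_plus; apply bnd_rsum; intros; [apply bnd_uC|apply bnd_uA].
        - intros h _. apply swap_identity; try lia. }
      rewrite avg_scal, avg_plus. apply Rmult_le_compat_l. left; apply Rinv_0_lt_compat, lt_0_INR; lia.
      apply Rplus_le_compat.
      - apply (massart_apply p Hp Hpm (fun i j => nth0 (y i) (m + j)) 1). ring.
      - apply (massart_apply p Hp Hpm (fun i j => nth0 (y i) j) (-1)). ring. }
    rewrite avg_const by auto.
    replace (2 * INR d * ln (exp 1 * INR (length I) * INR m / INR d) / INR m) with (2 * Bc / INR m).
    2:{ unfold Bc. rewrite mult_INR. unfold Rdiv. rewrite !Rmult_assoc. auto. }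
    unfold c, Mb. apply final_arith; auto; try lia.
    + unfold p. destruct (Nat.le_ge_cases m r).
      * rewrite Nat.min_l by auto. apply Nat.mul_le_mono_r. apply Nat.mul_le_mono; lia.
      * rewrite Nat.min_r by auto. replace (r * r * m)%nat with (r * m * r)%nat by ring.
        apply Nat.mul_le_mono_r. apply Nat.mul_le_mono; lia.
    + eapply Bc_pos; eauto.
Qed.
End PerT.

Theorem mainTheorem5
  (X : Type) (T n m k d : nat)
  (S : nat -> nat -> X) (f : nat -> X -> bool)
  (H : (X -> bool) -> Prop)
  (I : list nat) (alpha : nat -> nat -> R)
  (HI : NoDup I) (HIT : forall i, In i I -> (i < T)%nat)
  (Hk : length I = k)
  (Halpha : forall t, (t < T)%nat -> in_Lambda T I (alpha t))
  (HVC : VCdim H d)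
  (Hd : (1 <= d)%nat) (Hdm : (d <= m)%nat) (Hmn : (m <= n)%nat) :
  expect_subsets I n m (Phi S f H T n m I alpha)
  <= / INR T * sumR (seq 0 T) (fun t =>
        sqrt (sumR I (fun i => (alpha t i) ^ 2)))
     * sqrt (2 * INR d * ln (exp 1 * INR k * INR m / INR d) / INR m).
Proof.
  assert (Hne : exists h, H h).
  { destruct HVC as [[P [_ [_ Hsh]]] _]. destruct (Hsh (fun _ => true)) as [h [Hh _]]; eauto. }
  subst k.
  set (K := sqrt (2 * INR d * ln (exp 1 * INR (length I) * INR m / INR d) / INR m)).
  assert (HT : 0 <= / INR T).
  { destruct T. simpl. rewrite Rinv_0; lra. left; apply Rinv_0_lt_compat, lt_0_INR; lia. }
  set (U := fun x => / INR T * sumR (seq 0 T) (fun t => supH X H (Dfun X S f n m I (alpha t) x))).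
  assert (HPhi : forall x, Phi S f H T n m I alpha x <= U x).
  { intros x. unfold Phi.
    set (E := fun v => exists hs : nat -> X -> bool, (forall t, (t < T)%nat -> H (hs t)) /\
          v = / INR T * sumR (seq 0 T) (fun t => er_tilde_w S f n I (alpha t) (hs t) - er_hat_w S f m x I (alpha t) (hs t))).
    assert (HEb : forall v, E v -> v <= U x).
    { intros v [hs [Hhs ->]]. unfold U. apply Rmult_le_compat_l; auto. apply sumR_le; intros t Ht.
      apply in_seq in Ht. apply (supH_ub X H Hne (Dfun X S f n m I (alpha t) x) (hs t)).
      apply bnd_D. apply Hhs; lia. }
    assert (Hlub : is_lub E (Rsup E)).
    { apply Rsup_lub. exists (U x); auto. destruct Hne as [h0 Hh0].
      exists (/ INR T * sumR (seq 0 T) (fun t => er_tilde_w S f n I (alpha t) h0 - er_hat_w S f m x I (alpha t) h0)).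
      exists (fun _ => h0). split; auto. }
    apply (proj2 Hlub). intros v Hv; apply HEb; auto. }
  unfold expect_subsets.
  change (sumR (choices I n m) (Phi S f H T n m I alpha) / INR (length (choices I n m)))
    with (avg (choices I n m) (Phi S f H T n m I alpha)).
  eapply Rle_trans. apply avg_le; intros x _; apply HPhi.
  unfold U. rewrite avg_scal, avg_sumR.
  rewrite Rmult_assoc. apply Rmult_le_compat_l; auto.
  rewrite Rmult_comm, <- sumR_scal. apply sumR_le; intros t Ht. apply in_seq in Ht.
  destruct (Halpha t ltac:(lia)) as [_ [Hs _]].
  rewrite Rmult_comm. apply (per_t X S f H n m d I (alpha t)); auto.
Qed.
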